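(* Let $(X,d)$ be a compact doubling metric space with $\operatorname{diam}(X,d)=1/2$, and let $\mathcal S$ be a hyperbolic filling of $(X,d)$ with vertical and horizontal parameters $a,\lambda$ satisfying $a\ge\lambda\ge6$. Let $\rho:\mathcal S\to(0,1)$ be a weight function satisfying the hypotheses (H1), (H2), (H3) and (H4), the latter with exponent $p>0$. Then there exists a metric $\Theta_\rho\in\mathcal J_p(X,d)$ such that $\dim_{\mathrm A}(X,\Theta_\rho)\le p$.
   Context: Hyperbolic filling: $(X,d)$ compact with $\operatorname{diam}=1/2$, $a,\lambda>1$. Fix an increasing sequence $X_0\subset X_1\subset\cdots$, each $X_n$ a maximal $a^{-n}$-separated subset of $X$ (so $X_0=\{x_0\}$). Let $\mathcal S_n=\{(x,n):x\in X_n\}$, $\mathcal S=\bigcup_n\mathcal S_n$, $\pi_1(x,n)=x$, $\pi_2(x,n)=n$, $v_0=(x_0,0)$, $B_v=B(\pi_1(v),a^{-\pi_2(v)})$. Each $(x,n)$, $n\ge1$, has a fixed parent $(y,n-1)$ with $d(x,y)=\min_{z\in X_{n-1}}d(x,z)$ (and is a child of it); descendants are obtained by iterating the child relation, $\mathcal D_n(v)$ is the set of descendants of $v$ in $\mathcal S_n$. The genealogy $g(v)$ of $v\in\mathcal S_k$ is $(v_0,\dots,v_k=v)$ with $v_i$ the parent of $v_{i+1}$. The graph $(\mathcal S,D_2)$ has edges between each vertex and its parent, and horizontal edges between distinct $(x,n),(y,n)$ with $B(x,\lambda a^{-n})\cap B(y,\lambda a^{-n})\neq\emptyset$; $D_2$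 is its graph distance. A path is a finite sequence of vertices, consecutive ones joined by an edge. Weights: for $\rho:\mathcal S\to(0,\infty)$ let $\pi(v)=\prod_{w\in g(v)}\rho(w)$ and, for a path $\gamma$, $L_\rho(\gamma)=\sum_{v\in\gamma}\pi(v)$. For distinct $x,y\in X$ let $\tilde n$ be the largest integer such that $\{x,y\}\subset B(\tilde z,2a^{-\tilde n})$ for some $(\tilde z,\tilde n)\in\mathcal S$, let $c(x,y)=\{(\tilde z,\tilde n)\in\mathcal S:\{x,y\}\subset B(\tilde z,2a^{-\tilde n})\}$ and $\pi(c(x,y))=\max_{w\in c(x,y)}\pi(w)$. $\Gamma_n(x,y)$ is the set of paths $(v_1,\dots,v_k)$ in $(\mathcal S,D_2)$ with $\pi_2(v_1)=\pi_2(v_k)=n$, $x\in B_{v_1}$, $y\in B_{v_k}$. Hypotheses: (H1) there are $0<\eta_-\le\eta_+<1$ with $\eta_-\le\rho\le\eta_+$ on $\mathcal S$. (H2) there is $K_0\ge1$ with $\pi(v)\le K_0\pi(w)$ whenever $v,w$ share a horizontal edge. (H3) there is $K_1\ge1$ such that for all distinct $x,y\in X$ there is $n_0\ge1$ with $L_\rho(\gamma)\ge K_1^{-1}\pi(c(x,y))$ for all $n\ge n_0$ and $\gamma\in\Gamma_n(x,y)$. (H4) there is $p>0$ with $\sum_{w\in\mathcal D_n(v)}\pi(w)^p\le\pi(v)^p$ for all $v\in\mathcal S_m$, $n>m$. $(X,d)$ is doubling if there is $N$ such that every ball of radius $r$ is covered by $N$ balls of radius $r/2$. Assouad dimension: $\dim_{\mathrm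 A}(X,\theta)=\inf\{\beta>0:\exists C,\ N_r(B(x,R))\le C(R/r)^\beta\ \forall x,\,0<r<R\}$, $N_r$ the minimal number of $r$-balls in a cover. $\mathcal J_p(X,d)$ is the set of metrics $\theta$ on $X$ such that $\theta(x,a)/\theta(x,b)\le\eta(d(x,a)/d(x,b))$ for all $x,a,b$, $x\ne b$, with $\eta(t)=C(t^\alpha\vee t^{1/\alpha})$ for some $C,\alpha\ge1$. *)

(* Defs.v *)
From Stdlib Require Import Reals List.
From Stdlib Require Import ClassicalEpsilon.
From Coquelicot Require Import Rbar Lub.
Import ListNotations.
Open Scope R_scope.

Definition is_metric {X : Type} (d : X -> X -> R) : Prop :=
  (forall x y, 0 <= d x y) /\
  (forall x y, d x y = 0 <-> x = y) /\
  (forall x y, d x y = d y x) /\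
  (forall x y z, d x z <= d x y + d y z).

Definition mball {X : Type} (d : X -> X -> R) (x : X) (r : R) : X -> Prop :=
  fun y => d x y < r.

Definition mopen_set {X : Type} (d : X -> X -> R) (U : X -> Prop) : Prop :=
  forall x, U x -> exists r, 0 < r /\ forall y, mball d x r y -> U y.

Definition mcompact {X : Type} (d : X -> X -> R) : Prop :=
  forall (I : Type) (U : I -> X -> Prop),
    (forall i, mopen_set d (U i)) -> (forall x, exists i, U i x) ->
    exists l : list I, forall x, exists i, In i l /\ U i x.

Definition doubling {X : Type} (d : X -> X -> R) : Prop :=
  exists N : nat, forall (x : X) (r : R), 0 < r ->
    exists l : list X, (length l <= N)%nat /\
      forall y, mball d x r y -> exists c, In c l /\ mball d c (r / 2) y.

Definition diam_eq {X : Type} (d : X -> X -> R) (D : R) : Prop :=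
  is_lub (fun t => exists x y, t = d x y) D.

Definition separated {X : Type} (d : X -> X -> R) (eps : R) (A : X -> Prop) : Prop :=
  forall x y, A x -> A y -> x <> y -> eps <= d x y.

Definition maximal_separated {X : Type} (d : X -> X -> R) (eps : R) (A : X -> Prop) : Prop :=
  separated d eps A /\
  forall B : X -> Prop, separated d eps B -> (forall x, A x -> B x) -> (forall x, B x -> A x).

Definition apow (a : R) (n : nat) : R := / (a ^ n).

(* Vertices are pairs (x,n); (x,n) is in S iff x is in X_n. *)
Definition V (X : Type) : Type := (X * nat)%type.

Definition inS {X : Type} (Xn : nat -> X -> Prop) (v : V X) : Prop := Xn (snd v) (fst v).

(* [par x n] (n >= 1) is the first coordinate of the parent (par x n, n-1) of (x,n). *)
Definition hyperbolic_filling {X : Type} (d : X -> X -> R) (a : R)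
    (Xn : nat -> X -> Prop) (x0 : X) (par : X -> nat -> X) : Prop :=
  (forall n x, Xn n x -> Xn (S n) x) /\
  (forall n, maximal_separated d (apow a n) (Xn n)) /\
  (forall x, Xn 0%nat x <-> x = x0) /\
  (forall n x, Xn (S n) x ->
     Xn n (par x (S n)) /\ forall z, Xn n z -> d x (par x (S n)) <= d x z).

Definition parentV {X : Type} (par : X -> nat -> X) (v : V X) : V X :=
  match snd v with
  | 0%nat => v
  | S m => (par (fst v) (S m), m)
  end.

Definition anc {X : Type} (par : X -> nat -> X) (v : V X) (j : nat) : V X :=
  Nat.iter j (parentV par) v.

Fixpoint prodR (f : nat -> R) (n : nat) : R :=
  match n with
  | 0%nat => f 0%nat
  | S m => prodR f m * f (S m)
  end.

(* pi(v) = product of rho over the genealogy g(v) = (v_0, ..., v_k = v) *)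
Definition piw {X : Type} (par : X -> nat -> X) (rho : V X -> R) (v : V X) : R :=
  prodR (fun j => rho (anc par v j)) (snd v).

Definition desc {X : Type} (Xn : nat -> X -> Prop) (par : X -> nat -> X)
    (v : V X) (n : nat) (w : V X) : Prop :=
  inS Xn w /\ snd w = n /\ exists j, (1 <= j)%nat /\ anc par w j = v.

Definition hedge {X : Type} (d : X -> X -> R) (a lam : R) (Xn : nat -> X -> Prop)
    (u v : V X) : Prop :=
  inS Xn u /\ inS Xn v /\ snd u = snd v /\ u <> v /\
  exists z, mball d (fst u) (lam * apow a (snd u)) z /\
            mball d (fst v) (lam * apow a (snd v)) z.

Definition vedge {X : Type} (Xn : nat -> X -> Prop) (par : X -> nat -> X) (u v : V X) : Prop :=
  inS Xn u /\ inS Xn v /\ (1 <= snd u)%nat /\ v = parentV par u.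

Definition edge {X : Type} (d : X -> X -> R) (a lam : R) (Xn : nat -> X -> Prop)
    (par : X -> nat -> X) (u v : V X) : Prop :=
  vedge Xn par u v \/ vedge Xn par v u \/ hedge d a lam Xn u v.

Fixpoint is_chain {X : Type} (e : V X -> V X -> Prop) (l : list (V X)) : Prop :=
  match l with
  | [] => True
  | u :: t => match t with
              | [] => True
              | v :: _ => e u v /\ is_chain e t
              end
  end.

Definition is_path {X : Type} (d : X -> X -> R) (a lam : R) (Xn : nat -> X -> Prop)
    (par : X -> nat -> X) (g : list (V X)) : Prop :=
  g <> [] /\ Forall (inS Xn) g /\ is_chain (edge d a lam Xn par) g.

Definition Bv {X : Type} (d : X -> X -> R) (a : R) (v : V X) : X -> Prop :=
  mball d (fst v) (apow a (snd v)).

Definition Gamma {X : Type} (d : X -> X -> R) (a lam : R) (Xn : nat -> X -> Prop)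
    (par : X -> nat -> X) (n : nat) (x y : X) (g : list (V X)) : Prop :=
  is_path d a lam Xn par g /\
  exists u, hd_error g = Some u /\
    snd u = n /\ snd (last g u) = n /\ Bv d a u x /\ Bv d a (last g u) y.

Definition Lrho {X : Type} (par : X -> nat -> X) (rho : V X -> R) (g : list (V X)) : R :=
  fold_right (fun v s => piw par rho v + s) 0 g.

Definition both_in {X : Type} (d : X -> X -> R) (a : R) (x y : X) (w : V X) : Prop :=
  mball d (fst w) (2 * apow a (snd w)) x /\ mball d (fst w) (2 * apow a (snd w)) y.

Definition top_level {X : Type} (d : X -> X -> R) (a : R) (Xn : nat -> X -> Prop)
    (x y : X) (n : nat) : Prop :=
  (exists z, inS Xn (z, n) /\ both_in d a x y (z, n)) /\
  (forall w, inS Xn w -> both_in d a x y w -> (snd w <= n)%nat).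

Definition in_c {X : Type} (d : X -> X -> R) (a : R) (Xn : nat -> X -> Prop)
    (x y : X) (w : V X) : Prop :=
  inS Xn w /\ top_level d a Xn x y (snd w) /\ both_in d a x y w.

Definition is_max_of (P : R -> Prop) (m : R) : Prop :=
  P m /\ forall r, P r -> r <= m.

Definition pi_c {X : Type} (d : X -> X -> R) (a : R) (Xn : nat -> X -> Prop)
    (par : X -> nat -> X) (rho : V X -> R) (x y : X) : R :=
  epsilon (inhabits 0)
    (is_max_of (fun r => exists w, in_c d a Xn x y w /\ r = piw par rho w)).

Definition H1 {X : Type} (Xn : nat -> X -> Prop) (rho : V X -> R) : Prop :=
  exists em ep, 0 < em /\ em <= ep /\ ep < 1 /\
    forall v, inS Xn v -> em <= rho v /\ rho v <= ep.

Definition H2 {X : Type} (d : X -> X -> R) (a lam : R) (Xn : nat -> X -> Prop)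
    (par : X -> nat -> X) (rho : V X -> R) : Prop :=
  exists K0, 1 <= K0 /\
    forall v w, hedge d a lam Xn v w -> piw par rho v <= K0 * piw par rho w.

Definition H3 {X : Type} (d : X -> X -> R) (a lam : R) (Xn : nat -> X -> Prop)
    (par : X -> nat -> X) (rho : V X -> R) : Prop :=
  exists K1, 1 <= K1 /\
    forall x y : X, x <> y -> exists n0 : nat, (1 <= n0)%nat /\
      forall n g, (n0 <= n)%nat -> Gamma d a lam Xn par n x y g ->
        / K1 * pi_c d a Xn par rho x y <= Lrho par rho g.

(* sum over the (finite) set D_n(v): every finite family of distinct descendants *)
Definition H4 {X : Type} (Xn : nat -> X -> Prop) (par : X -> nat -> X)
    (rho : V X -> R) (p : R) : Prop :=
  forall v n, inS Xn v -> (snd v < n)%nat ->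
    forall l : list (V X), NoDup l -> Forall (desc Xn par v n) l ->
      fold_right (fun w s => Rpower (piw par rho w) p + s) 0 l
        <= Rpower (piw par rho v) p.

(* t^s with the convention 0^s = 0 *)
Definition rpow (t s : R) : R := if Req_EM_T t 0 then 0 else Rpower t s.

Definition etaf (C alpha t : R) : R := C * Rmax (rpow t alpha) (rpow t (/ alpha)).

Definition in_J {X : Type} (d theta : X -> X -> R) : Prop :=
  exists C alpha, 1 <= C /\ 1 <= alpha /\
    forall x a b : X, x <> b -> theta x a / theta x b <= etaf C alpha (d x a / d x b).

(* beta is admissible: N_r(B(x,R)) <= C (R/r)^beta for all x, 0<r<R,
   where N_r(A) <= t means A admits a cover by at most t balls of radius r *)
Definition assouad_adm {X : Type} (theta : X -> X -> R) (beta : R) : Prop :=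
  0 < beta /\ exists C, forall (x : X) (r Rad : R), 0 < r -> r < Rad ->
    exists l : list X, INR (length l) <= C * Rpower (Rad / r) beta /\
      forall y, mball theta x Rad y -> exists c, In c l /\ mball theta c r y.

Definition assouad_dim {X : Type} (theta : X -> X -> R) : Rbar :=
  Glb_Rbar (assouad_adm theta).

(* Main.v *)
Require Import Defs.
From Stdlib Require Import Reals List.
From Coquelicot Require Import Rbar Lub.
From Stdlib Require Import Lra Lia Classical ClassicalEpsilon ZArith.
Import ListNotations.
Open Scope R_scope.

Section Main.
Variable X : Type.
Variable d : X -> X -> R.
Variables a lam : R.
Variable Xn : nat -> X -> Prop.
Variable x0 : X.
Variable par : X -> nat -> X.
Variable rho : V X -> R.
Variable p : R.
Variables em ep K0 K1 : R.
Variable Nd : nat.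
Hypothesis Hmet : is_metric d.
Hypothesis Hdbl : forall x r, 0 < r -> exists l : list X, (length l <= Nd)%nat /\
   forall y, mball d x r y -> exists c, In c l /\ mball d c (r / 2) y.
Hypothesis Hdiam : forall x y, d x y <= 1/2.
Hypothesis Hlam : 6 <= lam.
Hypothesis Hla : lam <= a.
Hypothesis Hhf : hyperbolic_filling d a Xn x0 par.
Hypothesis Hem : 0 < em.
Hypothesis Hemep : em <= ep.
Hypothesis Hep1 : ep < 1.
Hypothesis Hrho : forall v, inS Xn v -> em <= rho v /\ rho v <= ep.
Hypothesis HK0 : 1 <= K0.
Hypothesis HH2 : forall v w, hedge d a lam Xn v w -> piw par rho v <= K0 * piw par rho w.
Hypothesis HK1 : 1 <= K1.
Hypothesis HH3 : forall x y : X, x <> y -> exists n0 : nat, (1 <= n0)%nat /\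
      forall n g, (n0 <= n)%nat -> Gamma d a lam Xn par n x y g ->
        / K1 * pi_c d a Xn par rho x y <= Lrho par rho g.
Hypothesis Hp : 0 < p.
Hypothesis HH4 : H4 Xn par rho p.

Notation pi := (piw par rho).
Notation inSv := (inS Xn).

Lemma d_nn x y : 0 <= d x y. Proof. destruct Hmet as [h _]; auto. Qed.
Lemma d_sym x y : d x y = d y x. Proof. destruct Hmet as [_ [_ [h _]]]; auto. Qed.
Lemma d_tri x y z : d x z <= d x y + d y z. Proof. destruct Hmet as [_ [_ [_ h]]]; auto. Qed.
Lemma d_xx x : d x x = 0. Proof. destruct Hmet as [_ [h _]]. apply h; auto. Qed.
Lemma d_eq0 x y : d x y = 0 -> x = y. Proof. destruct Hmet as [_ [h _]]. apply h. Qed.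

Lemma a_ge6 : 6 <= a. Proof. lra. Qed.
Lemma a_pos : 0 < a. Proof. lra. Qed.

Lemma apow_pos n : 0 < apow a n.
Proof. unfold apow. apply Rinv_0_lt_compat, pow_lt; lra. Qed.
Lemma apow_0 : apow a 0 = 1. Proof. unfold apow; simpl; lra. Qed.
Lemma apow_S n : apow a (S n) = apow a n / a.
Proof. unfold apow. simpl. rewrite Rinv_mult. unfold Rdiv. ring. Qed.
Lemma apow_add n k : apow a (n + k) = apow a n * apow a k.
Proof. unfold apow. rewrite pow_add, Rinv_mult. ring. Qed.
Lemma apow_le1 n : apow a n <= 1.
Proof. unfold apow. rewrite <- Rinv_1. apply Rinv_le_contravar; [lra|].
  apply pow_R1_Rle; lra. Qed.
Lemma apow_mono m n : (m <= n)%nat -> apow a n <= apow a m.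
Proof. intros H. replace n with (m + (n - m))%nat by lia. rewrite apow_add.
  pose proof (apow_pos m). pose proof (apow_le1 (n-m)). pose proof (apow_pos (n-m)). nra. Qed.
Lemma apow_S_le n : apow a (S n) <= apow a n / 6.
Proof. rewrite apow_S. pose proof (apow_pos n). unfold Rdiv.
  apply Rmult_le_compat_l; [lra|]. apply Rinv_le_contravar; lra. Qed.

Lemma hf_mono n x : Xn n x -> Xn (S n) x. Proof. destruct Hhf as [h _]; auto. Qed.
Lemma hf_sep n : maximal_separated d (apow a n) (Xn n). Proof. destruct Hhf as [_ [h _]]; auto. Qed.
Lemma hf_0 x : Xn 0%nat x <-> x = x0. Proof. destruct Hhf as [_ [_ [h _]]]; auto. Qed.
Lemma hf_par n x : Xn (S n) x -> Xn n (par x (S n)) /\ forall z, Xn n z -> d x (par x (S n)) <= d x z.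
Proof. destruct Hhf as [_ [_ [_ h]]]; auto. Qed.

Lemma cover n y : exists z, Xn n z /\ d z y < apow a n.
Proof.
  destruct (classic (Xn n y)) as [Hy|Hy].
  - exists y. rewrite d_xx. split; auto. apply apow_pos.
  - destruct (hf_sep n) as [Hs Hm].
    destruct (classic (exists z, Xn n z /\ d z y < apow a n)) as [E|NE]; auto.
    exfalso. apply Hy. apply (Hm (fun w => Xn n w \/ w = y)); auto.
    intros u w [Hu|Hu] [Hw|Hw] Hne.
    + apply Hs; auto.
    + subst w. apply Rnot_lt_le. intro Hl. apply NE. exists u; auto.
    + subst u. apply Rnot_lt_le. intro Hl. apply NE. exists w. rewrite d_sym; auto.
    + subst; congruence.
Qed.

Lemma Xn_mono m n x : (m <= n)%nat -> Xn m x -> Xn n x.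
Proof. induction 1; auto. intros; apply hf_mono; auto. Qed.

Lemma snd_parentV v : snd (parentV par v) = pred (snd v).
Proof. destruct v as [x [|k]]; reflexivity. Qed.

Lemma inS_parentV v : inSv v -> inSv (parentV par v).
Proof. destruct v as [x [|k]]; unfold inS, parentV; simpl; auto.
  intros H. apply hf_par in H. tauto. Qed.

Lemma anc_S v i : anc par v (S i) = parentV par (anc par v i).
Proof. reflexivity. Qed.
Lemma anc_S' v i : anc par v (S i) = anc par (parentV par v) i.
Proof. unfold anc. apply Nat.iter_succ_r. Qed.
Lemma anc_0 v : anc par v 0 = v. Proof. reflexivity. Qed.
Lemma anc_add v i j : anc par (anc par v i) j = anc par v (j + i).
Proof. unfold anc. rewrite Nat.iter_add. reflexivity. Qed.
Lemma snd_anc v i : snd (anc par v i) = (snd v - i)%nat.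
Proof. induction i. simpl; lia. rewrite anc_S, snd_parentV, IHi. lia. Qed.
Lemma inS_anc v i : inSv v -> inSv (anc par v i).
Proof. intros H; induction i; auto. rewrite anc_S. apply inS_parentV; auto. Qed.

Lemma level0 v : inSv v -> snd v = 0%nat -> v = (x0, 0%nat).
Proof. destruct v as [x k]; unfold inS; simpl. intros H ->. apply hf_0 in H. subst; auto. Qed.

Lemma anc_top v : inSv v -> anc par v (snd v) = (x0, 0%nat).
Proof. intros H. apply level0. apply inS_anc; auto. rewrite snd_anc; lia. Qed.

Lemma par_dist v : inSv v -> (1 <= snd v)%nat ->
  d (fst v) (fst (parentV par v)) < apow a (pred (snd v)).
Proof.
  destruct v as [x [|k]]; simpl; [lia|]. unfold inS; simpl. intros H _.
  destruct (hf_par _ _ H) as [_ Hmin]. destruct (cover k x) as [z [Hz Hd]].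
  specialize (Hmin z Hz). rewrite d_sym in Hd. lra.
Qed.

Lemma anc_dist i : forall j v, inSv v -> snd v = (j + i)%nat ->
  d (fst v) (fst (anc par v i)) <= 6/5 * apow a j.
Proof.
  induction i; intros j v Hv Hs.
  - rewrite anc_0, d_xx. pose proof (apow_pos j). lra.
  - rewrite anc_S.
    assert (IH := IHi (S j) v Hv ltac:(lia)).
    assert (Hsa : snd (anc par v i) = S j) by (rewrite snd_anc; lia).
    assert (Hp1 := par_dist (anc par v i) (inS_anc v i Hv) ltac:(lia)).
    rewrite Hsa in Hp1. simpl in Hp1.
    pose proof (d_tri (fst v) (fst (anc par v i)) (fst (parentV par (anc par v i)))).
    pose proof (apow_S_le j). pose proof (apow_pos j). lra.
Qed.

Lemma prodR_ext f g n : (forall j, f j = g j) -> prodR f n = prodR g n.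
Proof. intros H; induction n; simpl; rewrite ?IHn, ?H; auto. Qed.
Lemma prodR_shift f k : prodR f (S k) = f 0%nat * prodR (fun j => f (S j)) k.
Proof. induction k. simpl; ring. change (prodR f (S (S k)) = f 0%nat * (prodR (fun j => f (S j)) k * f (S (S k)))).
  change (prodR f (S (S k))) with (prodR f (S k) * f (S (S k))). rewrite IHk. ring. Qed.

Lemma pi_parent v : (1 <= snd v)%nat -> pi v = pi (parentV par v) * rho v.
Proof.
  intros H. unfold piw. rewrite snd_parentV. destruct v as [x [|k]]; cbn [snd pred] in *; [lia|].
  rewrite prodR_shift. rewrite Rmult_comm. f_equal.
  apply prodR_ext. intros j. rewrite anc_S'. reflexivity.
Qed.

Lemma pi_lev0 v : snd v = 0%nat -> pi v = rho v.
Proof. intros H. unfold piw. rewrite H. reflexivity. Qed.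

Lemma pi_pos_k k : forall v, snd v = k -> inSv v -> 0 < pi v.
Proof.
  induction k; intros v Hs Hv.
  - rewrite pi_lev0; auto. destruct (Hrho v Hv); lra.
  - rewrite pi_parent by lia. destruct (Hrho v Hv).
    assert (0 < pi (parentV par v)). { apply IHk. rewrite snd_parentV; lia. apply inS_parentV; auto. }
    nra.
Qed.
Lemma pi_pos v : inSv v -> 0 < pi v.
Proof. intros; eapply pi_pos_k; eauto. Qed.

Lemma pi_anc_up i : forall v, inSv v -> (i <= snd v)%nat -> pi v <= ep^i * pi (anc par v i).
Proof.
  induction i; intros v Hv Hi.
  - simpl. lra.
  - pose proof (IHi v Hv ltac:(lia)) as IH.
    assert (Hs : (1 <= snd (anc par v i))%nat) by (rewrite snd_anc; lia).
    rewrite (pi_parent _ Hs) in IH. rewrite anc_S.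
    destruct (Hrho _ (inS_anc v i Hv)).
    pose proof (pi_pos _ (inS_parentV _ (inS_anc v i Hv))).
    assert (0 <= ep^i) by (apply pow_le; lra).
    simpl. assert (pi (parentV par (anc par v i)) * rho (anc par v i) <= pi (parentV par (anc par v i)) * ep) by nra.
    nra.
Qed.

Lemma pi_anc_lo i : forall v, inSv v -> (i <= snd v)%nat -> em^i * pi (anc par v i) <= pi v.
Proof.
  induction i; intros v Hv Hi.
  - simpl. lra.
  - pose proof (IHi v Hv ltac:(lia)) as IH.
    assert (Hs : (1 <= snd (anc par v i))%nat) by (rewrite snd_anc; lia).
    rewrite (pi_parent _ Hs) in IH. rewrite anc_S.
    destruct (Hrho _ (inS_anc v i Hv)).
    pose proof (pi_pos _ (inS_parentV _ (inS_anc v i Hv))).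
    assert (0 <= em^i) by (apply pow_le; lra).
    simpl. assert (pi (parentV par (anc par v i)) * em <= pi (parentV par (anc par v i)) * rho (anc par v i)) by nra.
    nra.
Qed.

Lemma pi_le_ep v : inSv v -> pi v <= ep ^ (snd v).
Proof.
  intros Hv. pose proof (pi_anc_up (snd v) v Hv ltac:(lia)) as H. rewrite anc_top in H; auto.
  assert (H0 : inSv (x0, 0%nat)) by (unfold inS; simpl; apply hf_0; auto).
  rewrite (pi_lev0 (x0,0%nat)) in H by reflexivity. destruct (Hrho _ H0).
  assert (0 <= ep ^ snd v) by (apply pow_le; lra). nra.
Qed.

Lemma ep_pos : 0 < ep. Proof. lra. Qed.

Lemma hedge_sym u v : hedge d a lam Xn u v -> hedge d a lam Xn v u.
Proof. unfold hedge. intros [? [? [? [? [z [? ?]]]]]]. repeat split; auto. exists z; auto. Qed.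

Lemma adj_close V W : inSv V -> inSv W -> snd V = snd W ->
  d (fst V) (fst W) < lam * apow a (snd V) -> V = W \/ hedge d a lam Xn V W.
Proof.
  intros HV HW Hs Hd. destruct (classic (V = W)) as [E|NE]; auto. right.
  repeat split; auto. exists (fst W). split. exact Hd. unfold mball. rewrite d_xx.
  pose proof (apow_pos (snd W)). nra.
Qed.

Lemma cmp v w j : inSv v -> inSv w -> (j <= snd v)%nat -> (j <= snd w)%nat ->
  d (fst v) (fst w) < 18/5 * apow a j ->
  pi v <= K0 * ep^(snd v - j) / em^(snd w - j) * pi w.
Proof.
  intros Hv Hw Hjk Hjl Hd.
  set (V := anc par v (snd v - j)). set (W := anc par w (snd w - j)).
  assert (HV : inSv V) by apply inS_anc, Hv.
  assert (HW : inSv W) by apply inS_anc, Hw.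
  assert (sV : snd V = j) by (unfold V; rewrite snd_anc; lia).
  assert (sW : snd W = j) by (unfold W; rewrite snd_anc; lia).
  assert (d1 := anc_dist (snd v - j) j v Hv ltac:(lia)).
  assert (d2 := anc_dist (snd w - j) j w Hw ltac:(lia)).
  fold V in d1. fold W in d2.
  assert (dVW : d (fst V) (fst W) < lam * apow a (snd V)).
  { rewrite sV. pose proof (d_tri (fst V) (fst v) (fst W)). pose proof (d_tri (fst v) (fst w) (fst W)).
    rewrite (d_sym (fst V) (fst v)) in H. pose proof (apow_pos j).
    assert (6 * apow a j <= lam * apow a j) by (apply Rmult_le_compat_r; lra). lra. }
  assert (HVW : pi V <= K0 * pi W).
  { destruct (adj_close V W HV HW ltac:(congruence) dVW) as [E|E].
    - rewrite E. pose proof (pi_pos W HW). nra.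
    - apply HH2; auto. }
  pose proof (pi_anc_up (snd v - j) v Hv ltac:(lia)) as U. fold V in U.
  pose proof (pi_anc_lo (snd w - j) w Hw ltac:(lia)) as L. fold W in L.
  assert (Hem' : 0 < em ^ (snd w - j)) by (apply pow_lt; lra).
  assert (Hep' : 0 <= ep ^ (snd v - j)) by (apply pow_le; lra).
  pose proof (pi_pos W HW).
  assert (pi W <= pi w / em ^ (snd w - j)).
  { apply (Rmult_le_reg_l (em ^ (snd w - j))); auto. field_simplify; lra. }
  unfold Rdiv in *. 
  apply Rle_trans with (ep ^ (snd v - j) * (K0 * pi W)). nra.
  assert (K0 * pi W <= K0 * (pi w * / em ^ (snd w - j))) by nra. nra.
Qed.


Lemma last_cons_ne {T} (v : T) l dd : l <> [] -> last (v :: l) dd = last l dd.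
Proof. destruct l; simpl; auto. congruence. Qed.
Lemma last_dflt {T} (u : T) l d1 d2 : last (u :: l) d1 = last (u :: l) d2.
Proof. revert u; induction l as [|b l IH]; intros u; [reflexivity|].
  rewrite !(last_cons_ne u) by congruence. apply IH. Qed.
Lemma last_app_cons {T} l1 (u : T) l2 dd : last (l1 ++ u :: l2) dd = last (u :: l2) dd.
Proof. induction l1 as [|b l1 IH]; [reflexivity|]. rewrite <- app_comm_cons.
  rewrite last_cons_ne. apply IH. destruct l1; simpl; congruence. Qed.

Lemma chain_cons_iff (e : V X -> V X -> Prop) u t :
  is_chain e (u :: t) <-> is_chain e t /\ (forall v, hd_error t = Some v -> e u v).
Proof. destruct t as [|v t]; simpl; split; intros H.
  - split; auto. intros; discriminate.
  - auto.
  - destruct H; split; auto. intros v' Hv; inversion Hv; subst; auto.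
  - destruct H as [H1 H2]. split; auto. Qed.

Lemma chain_app (e : V X -> V X -> Prop) l1 l2 : is_chain e l1 -> is_chain e l2 ->
  (forall u v dd, l1 <> [] -> hd_error l2 = Some v -> last l1 dd = u -> e u v) ->
  is_chain e (l1 ++ l2).
Proof.
  induction l1 as [|u l1 IH]; intros H1 H2 H3; simpl; auto.
  apply chain_cons_iff. apply chain_cons_iff in H1. destruct H1 as [H1 H1'].
  split.
  - apply IH; auto. intros u' v dd Hne Hv Hl. apply (H3 u' v dd). congruence. auto.
    rewrite last_cons_ne; auto.
  - intros v Hv. destruct l1 as [|w l1].
    + simpl in Hv. apply (H3 u v u). congruence. auto. reflexivity.
    + simpl in Hv. inversion Hv; subst. apply H1'. reflexivity.
Qed.

Lemma hd_rev {T} (u : T) t : hd_error (rev (u :: t)) = Some (last (u :: t) u).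
Proof.
  revert u; induction t as [|v t IH]; intros u; simpl; auto.
  simpl in IH. rewrite <- app_assoc. simpl.
  specialize (IH v). destruct (rev t) eqn:E; simpl in *.
  - inversion IH. destruct t; simpl; auto. apply (f_equal (@length T)) in E. simpl in E.
    rewrite length_app in E. simpl in E. lia.
  - rewrite IH. f_equal. destruct t; auto. apply last_dflt.
Qed.

Lemma chain_rev (e : V X -> V X -> Prop) : (forall u v, e u v -> e v u) ->
  forall l, is_chain e l -> is_chain e (rev l).
Proof.
  intros Hs l; induction l as [|u t IH]; simpl; auto. intros H.
  apply chain_cons_iff in H. destruct H as [Ht Hu].
  apply chain_app; auto. simpl; auto.
  intros u' v dd Hne Hv Hl. simpl in Hv. inversion Hv; subst v.
  destruct t as [|w t]. simpl in Hne; congruence.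
  assert (hd_error (rev (w :: t)) = Some (last (w :: t) w)) by apply hd_rev.
  apply Hs. apply Hu. simpl.
  rewrite <- Hl. simpl. rewrite last_last. reflexivity.
Qed.

Lemma edge_sym u v : edge d a lam Xn par u v -> edge d a lam Xn par v u.
Proof. unfold edge. intros [H|[H|H]]; auto. right; right; apply hedge_sym; auto. Qed.

Lemma Lrho_app l1 l2 : Lrho par rho (l1 ++ l2) = Lrho par rho l1 + Lrho par rho l2.
Proof. induction l1; simpl; [ring|]. unfold Lrho in *. simpl. rewrite IHl1. ring. Qed.
Lemma Lrho_rev l : Lrho par rho (rev l) = Lrho par rho l.
Proof. induction l; simpl; auto. rewrite Lrho_app, IHl. unfold Lrho; simpl. ring. Qed.
Lemma Lrho_nn l : Forall inSv l -> 0 <= Lrho par rho l.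
Proof. induction 1; unfold Lrho in *; simpl. lra. pose proof (pi_pos _ H). lra. Qed.

Lemma Gamma_rev n x y g : Gamma d a lam Xn par n x y g -> Gamma d a lam Xn par n y x (rev g).
Proof.
  intros [[Hne [Hin Hch]] [u [Hu [Hs1 [Hs2 [Hbx Hby]]]]]].
  destruct g as [|u0 t]; [congruence|]. simpl in Hu. inversion Hu; subst u0.
  split; [split; [|split]|].
  - intro E. apply (f_equal (@length _)) in E. rewrite length_rev in E. simpl in E. lia.
  - apply Forall_rev; auto.
  - apply chain_rev; auto. apply edge_sym.
  - exists (last (u :: t) u). split; [apply hd_rev|].
    assert (Hl : last (rev (u :: t)) (last (u :: t) u) = u) by (simpl; apply last_last).
    rewrite Hl. auto.
Qed.


Definition upc (u : V X) (k : nat) : list (V X) := map (anc par u) (seq 0 (S k)).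

Lemma upc_cons u k : upc u k = u :: map (anc par u) (seq 1 k).
Proof. reflexivity. Qed.
Lemma upc_S u k : upc u (S k) = upc u k ++ [anc par u (S k)].
Proof. unfold upc. rewrite seq_S, map_app. reflexivity. Qed.
Lemma upc_last u k dd : last (upc u k) dd = anc par u k.
Proof. destruct k. reflexivity. rewrite upc_S, last_last. reflexivity. Qed.
Lemma upc_in u k : inSv u -> Forall inSv (upc u k).
Proof. intros H. apply Forall_forall. intros w Hw. unfold upc in Hw. apply in_map_iff in Hw.
  destruct Hw as [i [<- _]]. apply inS_anc; auto. Qed.
Lemma upc_chain u k : inSv u -> (k <= snd u)%nat -> is_chain (edge d a lam Xn par) (upc u k).
Proof.
  intros Hu. induction k; intros Hk. simpl; auto.
  rewrite upc_S. apply chain_app. apply IHk; lia. simpl; auto.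
  intros u' v dd _ Hv Hl. simpl in Hv. inversion Hv; subst v. rewrite upc_last in Hl. subst u'.
  left. split; [apply inS_anc; auto|split; [apply inS_parentV, inS_anc; auto| split; [rewrite snd_anc; lia| reflexivity]]].
Qed.
Lemma upc_L u k : inSv u -> (k <= snd u)%nat -> Lrho par rho (upc u k) <= pi (anc par u k) / (1 - ep).
Proof.
  intros Hu. induction k; intros Hk.
  - unfold Lrho. simpl. pose proof (pi_pos u Hu). 
    assert (pi u <= pi u / (1-ep)). { apply (Rmult_le_reg_l (1-ep)). lra. field_simplify; nra. }
    lra.
  - rewrite upc_S, Lrho_app. specialize (IHk ltac:(lia)).
    pose proof (pi_anc_up 1 (anc par u k) (inS_anc u k Hu) ltac:(rewrite snd_anc; lia)) as H1.
    rewrite anc_add in H1. simpl (1 + k)%nat in H1. rewrite pow_1 in H1.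
    pose proof (pi_pos _ (inS_anc u (S k) Hu)).
    replace (Lrho par rho [anc par u (S k)]) with (pi (anc par u (S k))) by (unfold Lrho; simpl; ring).
    assert (pi (anc par u k) / (1 - ep) <= ep * pi (anc par u (S k)) / (1-ep)).
    { unfold Rdiv. apply Rmult_le_compat_r. apply Rlt_le, Rinv_0_lt_compat; lra. lra. }
    assert (ep * pi (anc par u (S k)) / (1 - ep) + pi (anc par u (S k)) = pi (anc par u (S k)) / (1 - ep)).
    { field. lra. }
    lra.
Qed.

Lemma last_P_rev_upc P u' k dd : last (P ++ rev (upc u' k)) dd = u'.
Proof. rewrite upc_cons. simpl. rewrite app_assoc. apply last_last. Qed.

Lemma hd_rev_upc u' k : hd_error (rev (upc u' k)) = Some (anc par u' k).
Proof. unfold upc. rewrite seq_S, map_app, rev_app_distr. reflexivity. Qed.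

Lemma path_via n x y u u' k : inSv u -> inSv u' -> snd u = n -> snd u' = n ->
  Bv d a u x -> Bv d a u' y -> (k <= n)%nat ->
  (anc par u k = anc par u' k \/ hedge d a lam Xn (anc par u k) (anc par u' k)) ->
  exists g, Gamma d a lam Xn par n x y g /\
    Lrho par rho g <= (pi (anc par u k) + pi (anc par u' k)) / (1 - ep).
Proof.
  intros Hu Hu' Hsu Hsu' Bx By Hk Hadj.
  assert (HA : 0 < pi (anc par u k)) by (apply pi_pos, inS_anc, Hu).
  assert (HA' : 0 < pi (anc par u' k)) by (apply pi_pos, inS_anc, Hu').
  assert (Hep0 : 0 < 1 - ep) by lra.
  assert (Gen : forall P, P <> [] -> hd_error P = Some u -> Forall inSv P ->
     is_chain (edge d a lam Xn par) P ->
     (forall dd, edge d a lam Xn par (last P dd) (anc par u' k)) ->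
     Gamma d a lam Xn par n x y (P ++ rev (upc u' k))).
  { intros P HP Hh Hin Hch Hlast. split; [split; [|split]|].
    - destruct P; simpl; congruence.
    - apply Forall_app; split; auto. apply Forall_rev, upc_in; auto.
    - apply chain_app; auto. apply chain_rev. apply edge_sym. apply upc_chain; auto; lia.
      intros u0 v dd _ Hv Hl. rewrite hd_rev_upc in Hv. inversion Hv; subst. apply Hlast.
    - exists u. destruct P as [|w P]; [congruence|]. simpl in Hh. inversion Hh; subst w.
      split; auto. rewrite last_P_rev_upc. repeat split; auto. }
  destruct Hadj as [E|Hh].
  - destruct k as [|k].
    + simpl in E. subst u'. exists [u]. split.
      * split; [split; [congruence|split]|]. constructor; auto. simpl; auto.
        exists u. simpl. repeat split; auto.
      * unfold Lrho; simpl. simpl in *. 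
        assert (pi u <= (pi u + pi u) / (1-ep)). { apply (Rmult_le_reg_l (1-ep)); auto. field_simplify; nra. }
        lra.
    + exists (upc u k ++ rev (upc u' (S k))). split.
      * apply Gen. rewrite upc_cons; congruence. reflexivity. apply upc_in; auto.
        apply upc_chain; auto; lia.
        intros dd. rewrite upc_last. rewrite <- E. rewrite anc_S.
        left. split; [apply inS_anc; auto|split; [apply inS_parentV, inS_anc; auto| split; [rewrite snd_anc; lia| reflexivity]]].
      * rewrite Lrho_app, Lrho_rev. pose proof (upc_L u k Hu ltac:(lia)). pose proof (upc_L u' (S k) Hu' ltac:(lia)).
        pose proof (pi_anc_up 1 (anc par u k) (inS_anc u k Hu) ltac:(rewrite snd_anc; lia)) as H1.
        rewrite anc_add in H1. simpl (1 + k)%nat in H1. rewrite pow_1 in H1.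
        assert (pi (anc par u k) / (1-ep) <= pi (anc par u (S k)) / (1-ep)).
        { unfold Rdiv. apply Rmult_le_compat_r. apply Rlt_le, Rinv_0_lt_compat; lra. nra. }
        assert ((pi (anc par u (S k)) + pi (anc par u' (S k))) / (1 - ep) = pi (anc par u (S k))/(1-ep) + pi (anc par u' (S k)) / (1 - ep)) by (field; lra).
        lra.
  - exists (upc u k ++ rev (upc u' k)). split.
    + apply Gen. rewrite upc_cons; congruence. reflexivity. apply upc_in; auto.
      apply upc_chain; auto; lia.
      intros dd. rewrite upc_last. right; right; auto.
    + rewrite Lrho_app, Lrho_rev. pose proof (upc_L u k Hu ltac:(lia)). pose proof (upc_L u' k Hu' ltac:(lia)).
      assert ((pi (anc par u k) + pi (anc par u' k)) / (1 - ep) = pi (anc par u k)/(1-ep) + pi (anc par u' k) / (1 - ep)) by (field; lra).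
      lra.
Qed.


Lemma in_last (u : V X) t : In (last (u :: t) u) (u :: t).
Proof. revert u; induction t as [|w t IH]; intros u. simpl; auto.
  rewrite last_cons_ne by congruence. rewrite (last_dflt w t u w). right. apply IH. Qed.

Lemma last_app_ne (l1 l2 : list (V X)) dd : l2 <> [] -> last (l1 ++ l2) dd = last l2 dd.
Proof. destruct l2; [congruence|]. intros; apply last_app_cons. Qed.

Lemma Gamma_concat n x y z g1 g2 : Gamma d a lam Xn par n x y g1 -> Gamma d a lam Xn par n y z g2 ->
  exists g, Gamma d a lam Xn par n x z g /\ Lrho par rho g <= Lrho par rho g1 + Lrho par rho g2.
Proof.
  intros [[Hne1 [Hin1 Hch1]] [u1 [Hu1 [Hs1 [Hl1 [Bx By1]]]]]]
         [[Hne2 [Hin2 Hch2]] [u2 [Hu2 [Hs2 [Hl2 [By2 Bz]]]]]].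
  destruct g1 as [|w1 t1]; [congruence|]. simpl in Hu1. inversion Hu1; subst w1.
  destruct g2 as [|w2 t2]; [congruence|]. simpl in Hu2. inversion Hu2; subst w2.
  set (L1 := last (u1 :: t1) u1) in *.
  assert (HL1 : inSv L1). { rewrite Forall_forall in Hin1. apply Hin1. apply in_last. }
  assert (Hu2S : inSv u2). { rewrite Forall_forall in Hin2. apply Hin2. left; auto. }
  destruct (classic (L1 = u2)) as [E|NE].
  - exists ((u1 :: t1) ++ t2). split.
    + apply chain_cons_iff in Hch2 as Hc2. destruct Hc2 as [Hct2 Hct2'].
      split; [split; [simpl; congruence|split]|].
      * apply Forall_app; split; auto. inversion Hin2; auto.
      * apply chain_app; auto. intros u0 v dd _ Hv Hl. rewrite (last_dflt u1 t1 dd u1) in Hl.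
        fold L1 in Hl. subst u0. rewrite E. apply Hct2'; auto.
      * exists u1. split; auto. destruct (classic (t2 = [])) as [->|Hne].
        { rewrite app_nil_r. fold L1. rewrite E. simpl in Bz. repeat split; auto. }
        rewrite last_app_ne; auto. destruct t2 as [|w t2']; [congruence|].
        rewrite (last_dflt w t2' u1 u2). rewrite <- (last_cons_ne u2 (w::t2') u2) by congruence.
        repeat split; auto.
    + rewrite Lrho_app. unfold Lrho at 3. simpl. pose proof (pi_pos u2 Hu2S). unfold Lrho. lra.
  - exists ((u1 :: t1) ++ (u2 :: t2)). split.
    + split; [split; [simpl; congruence|split]|].
      * apply Forall_app; split; auto.
      * apply chain_app; auto. intros u0 v dd _ Hv Hl. simpl in Hv. inversion Hv; subst v.
        rewrite (last_dflt u1 t1 dd u1) in Hl. fold L1 in Hl. subst u0.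
        right; right. destruct (adj_close L1 u2 HL1 Hu2S ltac:(congruence)) as [E|E]; auto.
        rewrite Hl1. unfold Bv, mball in By1, By2. rewrite Hl1 in By1. rewrite Hs2 in By2.
        pose proof (d_tri (fst L1) y (fst u2)). rewrite (d_sym y) in H.
        pose proof (apow_pos n).
        assert (2 * apow a n <= lam * apow a n) by (apply Rmult_le_compat_r; lra). lra.
        congruence.
      * exists u1. split; auto. rewrite last_app_cons, (last_dflt u2 t2 u1 u2). repeat split; auto.
    + rewrite Lrho_app. lra.
Qed.


Lemma glb_le (E : R -> Prop) t : E t -> (forall u, E u -> 0 <= u) -> real (Glb_Rbar E) <= t.
Proof.
  intros Ht H0. destruct (Glb_Rbar_correct E) as [Hlb Hg].
  assert (A1 := Hlb t Ht). assert (A2 := Hg (Finite 0) (fun u Hu => H0 u Hu)).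
  destruct (Glb_Rbar E); simpl in *; try contradiction; lra.
Qed.
Lemma glb_ge (E : R -> Prop) m : (exists t, E t) -> (forall u, E u -> m <= u) -> m <= real (Glb_Rbar E).
Proof.
  intros [t Ht] H0. destruct (Glb_Rbar_correct E) as [Hlb Hg].
  assert (A1 := Hlb t Ht). assert (A2 := Hg (Finite m) (fun u Hu => H0 u Hu)).
  destruct (Glb_Rbar E); simpl in *; try contradiction; lra.
Qed.
Lemma lub_ge (E : R -> Prop) B t : E t -> (forall u, E u -> u <= B) -> t <= real (Lub_Rbar E).
Proof.
  intros Ht H0. destruct (Lub_Rbar_correct E) as [Hub Hg].
  assert (A1 := Hub t Ht). assert (A2 := Hg (Finite B) (fun u Hu => H0 u Hu)).
  destruct (Lub_Rbar E); simpl in *; try contradiction; lra.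
Qed.
Lemma lub_le (E : R -> Prop) M : (exists t, E t) -> (forall u, E u -> u <= M) -> real (Lub_Rbar E) <= M.
Proof.
  intros [t Ht] H0. destruct (Lub_Rbar_correct E) as [Hub Hg].
  assert (A1 := Hub t Ht). assert (A2 := Hg (Finite M) (fun u Hu => H0 u Hu)).
  destruct (Lub_Rbar E); simpl in *; try contradiction; lra.
Qed.

Definition tsup (f : nat -> R) (N : nat) : R :=
  real (Lub_Rbar (fun s => exists n, (N <= n)%nat /\ s = f n)).
Definition lsup (f : nat -> R) : R := real (Glb_Rbar (fun t => exists N, t = tsup f N)).

Section LS.
Variable f : nat -> R.
Variable B : R.
Hypothesis Hb : forall n, 0 <= f n <= B.

Lemma tsup_ge N n : (N <= n)%nat -> f n <= tsup f N.
Proof using Hb. intros H. apply (lub_ge _ B). exists n; auto. intros u [m [_ ->]]. apply Hb. Qed.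
Lemma tsup_le N M : (forall n, (N <= n)%nat -> f n <= M) -> tsup f N <= M.
Proof using Hb. intros H. apply lub_le. exists (f N); exists N; auto. intros u [m [Hm ->]]. auto. Qed.
Lemma tsup_nn N : 0 <= tsup f N.
Proof using Hb. pose proof (tsup_ge N N (le_n _)). pose proof (Hb N). lra. Qed.
Lemma tsup_mono N1 N2 : (N1 <= N2)%nat -> tsup f N2 <= tsup f N1.
Proof using Hb. intros H. apply tsup_le. intros n Hn. apply tsup_ge. lia. Qed.
Lemma lsup_le_tsup N : lsup f <= tsup f N.
Proof using Hb. apply glb_le. exists N; auto. intros u [M ->]. apply tsup_nn. Qed.
Lemma lsup_ge_of m : (forall N, m <= tsup f N) -> m <= lsup f.
Proof using Hb. intros H. apply glb_ge. exists (tsup f 0); exists 0%nat; auto. intros u [M ->]; auto. Qed.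
Lemma lsup_approx eps : 0 < eps -> exists N, tsup f N < lsup f + eps.
Proof using Hb.
  intros He. apply NNPP. intros Hn.
  assert (lsup f + eps <= lsup f); [|lra].
  apply lsup_ge_of. intros N. apply Rnot_lt_le. intros Hl. apply Hn. exists N; auto.
Qed.
Lemma lsup_upper N0 M : (forall n, (N0 <= n)%nat -> f n <= M) -> lsup f <= M.
Proof using Hb. intros H. eapply Rle_trans. apply (lsup_le_tsup N0). apply tsup_le; auto. Qed.
Lemma lsup_lower N0 m : (forall n, (N0 <= n)%nat -> m <= f n) -> m <= lsup f.
Proof using Hb. intros H. apply lsup_ge_of. intros N. eapply Rle_trans. apply (H (Nat.max N N0)). lia.
  apply tsup_ge. lia. Qed.
Lemma lsup_nn : 0 <= lsup f.
Proof using Hb. apply (lsup_lower 0). intros; apply Hb. Qed.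
End LS.

Lemma lsup_sub f g h B : (forall n, 0 <= f n <= B) -> (forall n, 0 <= g n <= B) -> (forall n, 0 <= h n <= B) ->
  (forall n, f n <= g n + h n) -> lsup f <= lsup g + lsup h.
Proof.
  intros Hf Hg Hh H. apply Rnot_lt_le. intros Hl.
  set (eps := (lsup f - (lsup g + lsup h)) / 4).
  assert (He : 0 < eps) by (unfold eps; lra).
  destruct (lsup_approx g B Hg eps He) as [N1 H1].
  destruct (lsup_approx h B Hh eps He) as [N2 H2].
  set (N := Nat.max N1 N2).
  assert (tsup f N <= tsup g N1 + tsup h N2).
  { apply (tsup_le f B Hf). intros n Hn. eapply Rle_trans. apply H.
    pose proof (tsup_ge g B Hg N1 n ltac:(lia)). pose proof (tsup_ge h B Hh N2 n ltac:(lia)). lra. }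
  pose proof (lsup_le_tsup f B Hf N). unfold eps in *. lra.
Qed.

Lemma lsup_mono f g B : (forall n, 0 <= f n <= B) -> (forall n, 0 <= g n <= B) ->
  (forall n, f n <= g n) -> lsup f <= lsup g.
Proof.
  intros Hf Hg H. pose proof (Hf 0%nat). pose proof (lsup_sub f g (fun _ => 0) B Hf Hg) as HS.
  assert (lsup (fun _ : nat => 0) <= 0). { apply (lsup_upper _ B) with 0%nat. intros; split; lra. intros; lra. }
  assert (lsup f <= lsup g + lsup (fun _ => 0)). { apply HS. intros; split; lra. intros; specialize (H n); lra. }
  lra.
Qed.


Definition thn n x y : R :=
  real (Glb_Rbar (fun t => exists g, Gamma d a lam Xn par n x y g /\ t = Lrho par rho g)).

Definition Bth : R := 2 / (1 - ep).

Lemma v0_in : inSv (x0, 0%nat).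
Proof. unfold inS; simpl; apply hf_0; auto. Qed.

Lemma vert_at n y : exists u, inSv u /\ snd u = n /\ Bv d a u y.
Proof. destruct (cover n y) as [z [Hz Hd]]. exists (z, n). split; auto. Qed.

Lemma Gamma_ex n x y : exists g, Gamma d a lam Xn par n x y g /\ Lrho par rho g <= Bth.
Proof.
  destruct (vert_at n x) as [u [Hu [Hsu Bx]]]. destruct (vert_at n y) as [u' [Hu' [Hsu' By]]].
  assert (E1 : anc par u n = (x0, 0%nat)) by (rewrite <- Hsu; apply anc_top; auto).
  assert (E2 : anc par u' n = (x0, 0%nat)) by (rewrite <- Hsu'; apply anc_top; auto).
  destruct (path_via n x y u u' n Hu Hu' Hsu Hsu' Bx By (le_n _)) as [g [Hg HL]].
  left; congruence.
  exists g; split; auto. rewrite E1, E2 in HL. rewrite (pi_lev0 (x0,0%nat)) in HL by reflexivity.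
  destruct (Hrho _ v0_in). unfold Bth.
  assert ((rho (x0, 0%nat) + rho (x0, 0%nat)) / (1 - ep) <= 2 / (1-ep)).
  { unfold Rdiv. apply Rmult_le_compat_r. apply Rlt_le, Rinv_0_lt_compat; lra. lra. }
  lra.
Qed.

Lemma Gamma_in n x y g : Gamma d a lam Xn par n x y g -> Forall inSv g.
Proof. intros [[_ [H _]] _]; auto. Qed.

Lemma thn_le n x y g : Gamma d a lam Xn par n x y g -> thn n x y <= Lrho par rho g.
Proof. intros H. apply glb_le. exists g; auto. intros u [g' [Hg' ->]]. apply Lrho_nn. eapply Gamma_in; eauto. Qed.

Lemma thn_ge n x y m : (forall g, Gamma d a lam Xn par n x y g -> m <= Lrho par rho g) -> m <= thn n x y.
Proof. intros H. apply glb_ge. destruct (Gamma_ex n x y) as [g [Hg _]]. exists (Lrho par rho g). exists g; auto.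
  intros u [g' [Hg' ->]]. auto. Qed.

Lemma thn_bounds n x y : 0 <= thn n x y <= Bth.
Proof. split. apply thn_ge. intros g Hg; apply Lrho_nn; eapply Gamma_in; eauto.
  destruct (Gamma_ex n x y) as [g [Hg HL]]. pose proof (thn_le n x y g Hg). lra. Qed.

Lemma thn_tri n x y z : thn n x z <= thn n x y + thn n y z.
Proof.
  assert (H : forall g1 g2, Gamma d a lam Xn par n x y g1 -> Gamma d a lam Xn par n y z g2 ->
     thn n x z <= Lrho par rho g1 + Lrho par rho g2).
  { intros g1 g2 H1 H2. destruct (Gamma_concat n x y z g1 g2 H1 H2) as [g [Hg HL]].
    pose proof (thn_le n x z g Hg). lra. }
  assert (H' : forall g2, Gamma d a lam Xn par n y z g2 -> thn n x z - Lrho par rho g2 <= thn n x y).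
  { intros g2 H2. apply thn_ge. intros g1 H1. specialize (H g1 g2 H1 H2). lra. }
  assert (thn n x z - thn n x y <= thn n y z). { apply thn_ge. intros g2 H2. specialize (H' g2 H2). lra. }
  lra.
Qed.

Lemma thn_sym_le n x y : thn n y x <= thn n x y.
Proof. apply thn_ge. intros g Hg. rewrite <- Lrho_rev. apply thn_le. apply Gamma_rev; auto. Qed.
Lemma thn_sym n x y : thn n x y = thn n y x.
Proof. pose proof (thn_sym_le n x y). pose proof (thn_sym_le n y x). lra. Qed.

Definition th (x y : X) : R :=
  if excluded_middle_informative (x = y) then 0 else lsup (fun n => thn n x y).

Lemma th_nn x y : 0 <= th x y.
Proof. unfold th. destruct excluded_middle_informative. lra. apply (lsup_nn _ Bth). intros; apply thn_bounds. Qed.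

Lemma th_xx x : th x x = 0.
Proof. unfold th. destruct excluded_middle_informative; congruence. Qed.

Lemma th_sym x y : th x y = th y x.
Proof. unfold th. destruct excluded_middle_informative as [E|NE]; destruct excluded_middle_informative as [E'|NE'];
  subst; try congruence.
  apply Rle_antisym; apply (lsup_mono _ _ Bth); intros; try apply thn_bounds; rewrite thn_sym; lra.
Qed.

Lemma th_tri x y z : th x z <= th x y + th y z.
Proof.
  destruct (classic (x = z)) as [->|Hxz]. rewrite th_xx. pose proof (th_nn z y). pose proof (th_nn y z). lra.
  destruct (classic (x = y)) as [->|Hxy]. rewrite th_xx. lra.
  destruct (classic (y = z)) as [->|Hyz]. rewrite th_xx. lra.
  unfold th. destruct (excluded_middle_informative (x = z)); [congruence|].
  destruct (excluded_middle_informative (x = y)); [congruence|].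
  destruct (excluded_middle_informative (y = z)); [congruence|].
  apply (lsup_sub _ _ _ Bth); intros; try apply thn_bounds. apply thn_tri.
Qed.


Lemma nat_max (P : nat -> Prop) B : (exists n, P n) -> (forall n, P n -> (n <= B)%nat) ->
  exists n, P n /\ forall m, P m -> (m <= n)%nat.
Proof.
  revert P. induction B; intros P Hex Hb.
  - destruct Hex as [n Hn]. exists n. split; auto. intros m Hm. pose proof (Hb m Hm). pose proof (Hb n Hn). lia.
  - destruct (classic (P (S B))) as [H|H].
    + exists (S B). split; auto.
    + apply IHB; auto. intros n Hn. pose proof (Hb n Hn). destruct (Nat.eq_dec n (S B)); subst; [contradiction|lia].
Qed.

Lemma pow_ge_INR b k : 2 <= b -> INR k <= b ^ k.
Proof.
  intros Hb. induction k. simpl; lra. rewrite S_INR. simpl.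
  assert (1 <= b ^ k) by (apply pow_R1_Rle; lra). nra.
Qed.

Lemma exists_k R0 s : 0 < R0 -> 0 < s -> exists k, R0 / 2 ^ k <= s / 2.
Proof.
  intros HR Hs. destruct (INR_unbounded (2 * R0 / s)) as [k Hk]. exists k.
  pose proof (pow_ge_INR 2 k ltac:(lra)). assert (0 < 2 ^ k) by (apply pow_lt; lra).
  assert (H2 : 2 * R0 / s * s = 2 * R0) by (field; lra).
  assert (H3 : 2 * R0 < s * 2 ^ k) by nra.
  apply (Rmult_le_reg_r (2^k)); auto. replace (R0 / 2^k * 2^k) with R0 by (field; lra). nra.
Qed.

Lemma dbl_comb (l : list X) r : 0 < r -> exists L : list X, (length L <= Nd * length l)%nat /\
  forall c y, In c l -> d c y < r -> exists c', In c' L /\ d c' y < r / 2.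
Proof.
  intros Hr. induction l as [|c1 l IH].
  - exists []. split; simpl; [lia|]. intros c y [].
  - destruct IH as [L [HL Hc]]. destruct (Hdbl c1 r Hr) as [l1 [Hl1 Hc1]].
    exists (l1 ++ L). split. rewrite length_app. simpl. lia.
    intros c y [<-|Hin] Hd.
    + destruct (Hc1 y Hd) as [c' [Hc' Hd']]. exists c'. split; auto. apply in_or_app; auto.
    + destruct (Hc c y Hin Hd) as [c' [Hc' Hd']]. exists c'. split; auto. apply in_or_app; auto.
Qed.

Lemma dbl_iter k : forall c R0, 0 < R0 -> exists l : list X, (length l <= Nd ^ k)%nat /\
  forall y, d c y < R0 -> exists c', In c' l /\ d c' y < R0 / 2 ^ k.
Proof.
  induction k; intros c R0 HR.
  - exists [c]. split. simpl; lia. intros y Hy. exists c. split; [left; auto|]. simpl. lra.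
  - destruct (IHk c R0 HR) as [l [Hl Hc]].
    assert (Hr : 0 < R0 / 2 ^ k) by (apply Rdiv_lt_0_compat; auto; apply pow_lt; lra).
    destruct (dbl_comb l _ Hr) as [L [HL HcL]].
    exists L. split. rewrite Nat.pow_succ_r'. nia.
    intros y Hy. destruct (Hc y Hy) as [c' [Hc' Hd']]. destruct (HcL c' y Hc' Hd') as [c'' [H1 H2]].
    exists c''. split; auto. replace (R0 / 2 ^ S k) with (R0 / 2 ^ k / 2); auto. simpl. field.
    pose proof (pow_lt 2 k); lra.
Qed.

Lemma sep_pick (A : X -> Prop) s : (forall x y, A x -> A y -> x <> y -> s <= d x y) ->
  forall l : list X, exists L : list X, (length L <= length l)%nat /\
    forall z, A z -> (exists c, In c l /\ d c z < s / 2) -> In z L.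
Proof.
  intros Hs l. induction l as [|c l IH].
  - exists []. split; simpl; auto. intros z _ [c [[] _]].
  - destruct IH as [L [HL HLz]].
    destruct (classic (exists z, A z /\ d c z < s / 2)) as [[z0 [Hz0 Hd0]]|Hn].
    + exists (z0 :: L). split; simpl; [lia|].
      intros z Hz [c' [[<-|Hc'] Hd]].
      * left. apply NNPP. intros Hne. pose proof (Hs z0 z Hz0 Hz Hne).
        pose proof (d_tri z0 c z) as H0. rewrite (d_sym z0 c) in H0. lra.
      * right. apply HLz; eauto.
    + exists L. split; simpl; [lia|]. intros z Hz [c' [[<-|Hc'] Hd]].
      * exfalso. apply Hn. eauto.
      * apply HLz; eauto.
Qed.

Lemma fin_ball (A : X -> Prop) s c R0 k : (forall x y, A x -> A y -> x <> y -> s <= d x y) ->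
  0 < R0 -> R0 / 2 ^ k <= s / 2 ->
  exists L : list X, (length L <= Nd ^ k)%nat /\ forall z, A z -> d c z < R0 -> In z L.
Proof.
  intros Hs HR Hk. destruct (dbl_iter k c R0 HR) as [l [Hl Hc]].
  destruct (sep_pick A s Hs l) as [L [HL HLz]]. exists L. split. lia.
  intros z Hz Hd. apply HLz; auto. destruct (Hc z Hd) as [c' [? ?]]. exists c'. split; auto. lra.
Qed.

Lemma Xn_sep n : forall x y, Xn n x -> Xn n y -> x <> y -> apow a n <= d x y.
Proof. destruct (hf_sep n) as [H _]. exact H. Qed.

Lemma enum n : exists L : list X, forall z, Xn n z -> In z L.
Proof.
  destruct (exists_k 1 (apow a n) ltac:(lra) (apow_pos n)) as [k Hk].
  destruct (fin_ball (Xn n) (apow a n) x0 1 k (Xn_sep n) ltac:(lra) Hk) as [L [_ HL]].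
  exists L. intros z Hz. apply HL; auto. pose proof (Hdiam x0 z). lra.
Qed.

Lemma list_max (f : V X -> R) (L : list (V X)) : forall (Q : V X -> Prop), (forall w, Q w -> In w L) ->
  (exists w, Q w) -> exists w0, Q w0 /\ forall w, Q w -> f w <= f w0.
Proof.
  induction L as [|w1 L IH]; intros Q HQ Hex.
  - destruct Hex as [w Hw]. destruct (HQ w Hw).
  - destruct (classic (exists w, Q w /\ w <> w1)) as [Hx|Hx].
    + destruct (IH (fun w => Q w /\ w <> w1)) as [w0 [[Hw0 Hne] Hmax]]; auto.
      { intros w [Hw Hne]. destruct (HQ w Hw); [congruence|auto]. }
      destruct (classic (Q w1 /\ f w0 <= f w1)) as [[Hq1 Hle]|Hn].
      * exists w1. split; auto. intros w Hw. destruct (classic (w = w1)) as [->|Hne']. lra.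
        pose proof (Hmax w (conj Hw Hne')). lra.
      * exists w0. split; auto. intros w Hw. destruct (classic (w = w1)) as [->|Hne'].
        apply Rnot_lt_le. intros Hl. apply Hn. split; auto; lra.
        apply Hmax; auto.
    + destruct Hex as [w Hw]. exists w. split; auto. intros w' Hw'.
      assert (w = w1) by (apply NNPP; intro; apply Hx; eauto).
      assert (w' = w1) by (apply NNPP; intro; apply Hx; eauto). subst; lra.
Qed.

Lemma top_ex x y : x <> y -> exists n, top_level d a Xn x y n.
Proof.
  intros Hxy.
  set (P := fun n => exists z, inSv (z, n) /\ both_in d a x y (z, n)).
  assert (Hdxy : 0 < d x y). { pose proof (d_nn x y). destruct (Req_dec (d x y) 0) as [E|E].
    apply d_eq0 in E; contradiction. lra. }
  destruct (INR_unbounded (4 / d x y)) as [B HB].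
  destruct (nat_max P B) as [n [Hn Hmax]].
  - exists 0%nat. exists x0. split. apply v0_in. unfold both_in, mball; simpl. rewrite apow_0.
    pose proof (Hdiam x0 x). pose proof (Hdiam x0 y). lra.
  - intros n [z [_ [H1 H2]]]. unfold mball in H1, H2. simpl in H1, H2.
    pose proof (d_tri x z y). rewrite (d_sym x z) in H.
    assert (d x y < 4 * apow a n) by lra.
    apply Nat.nlt_ge. intros Hlt. apply lt_INR in Hlt.
    pose proof (pow_ge_INR a n ltac:(lra)).
    unfold apow in H0. assert (0 < a ^ n) by (apply pow_lt; lra).
    assert (d x y * a ^ n < 4). { apply (Rmult_lt_compat_r (a ^ n)) in H0; auto. field_simplify in H0; lra. }
    assert (4 / d x y * d x y = 4) by (field; lra).
    assert (a ^ n * d x y < INR B * d x y) by nra. nra.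
  - exists n. split; auto. intros w Hw Hb. destruct w as [z m]. simpl. apply Hmax. exists z; auto.
Qed.

Lemma top_unique x y n m : top_level d a Xn x y n -> top_level d a Xn x y m -> n = m.
Proof.
  intros [[z [Hz Hb]] Hn] [[z' [Hz' Hb']] Hm].
  pose proof (Hn _ Hz' Hb'). pose proof (Hm _ Hz Hb). simpl in *. lia.
Qed.

Lemma c_ex x y : x <> y -> exists w, in_c d a Xn x y w.
Proof. intros H. destruct (top_ex x y H) as [n Hn]. pose proof Hn as Ht. destruct Hn as [[z [Hz Hb]] _].
  exists (z, n). unfold in_c. simpl. auto. Qed.

Lemma c_props x y w : in_c d a Xn x y w -> inSv w /\ d (fst w) x < 2 * apow a (snd w) /\
   d (fst w) y < 2 * apow a (snd w) /\ top_level d a Xn x y (snd w).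
Proof. intros [H1 [H2 [H3 H4]]]. unfold mball in *. auto. Qed.

Lemma c_upper x y w : in_c d a Xn x y w -> d x y < 4 * apow a (snd w).
Proof. intros H. destruct (c_props _ _ _ H) as [_ [H1 [H2 _]]].
  pose proof (d_tri x (fst w) y) as H0. rewrite (d_sym x (fst w)) in H0. lra. Qed.

Lemma c_lower x y w : in_c d a Xn x y w -> apow a (S (snd w)) < d x y.
Proof.
  intros H. destruct (c_props _ _ _ H) as [_ [_ [_ [_ Htop]]]].
  destruct (cover (S (snd w)) x) as [z [Hz Hd]].
  destruct (Rlt_or_le (d z y) (2 * apow a (S (snd w)))) as [Hl|Hl].
  - exfalso. assert (HH := Htop (z, S (snd w)) Hz). simpl in HH.
    assert (S (snd w) <= snd w)%nat; [|lia]. apply HH. unfold both_in, mball; simpl.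
    pose proof (apow_pos (S (snd w))). split; lra.
  - pose proof (d_tri z x y). lra.
Qed.

Lemma pic_max x y : x <> y -> is_max_of (fun r => exists w, in_c d a Xn x y w /\ r = pi w) (pi_c d a Xn par rho x y).
Proof.
  intros Hxy. unfold pi_c. apply epsilon_spec.
  destruct (c_ex x y Hxy) as [w Hw].
  destruct (enum (snd w)) as [L HL].
  destruct (list_max pi (map (fun z => (z, snd w)) L) (in_c d a Xn x y)) as [w0 [Hw0 Hmax]].
  - intros [z m] Hw'. destruct Hw' as [Hin' [Ht' _]]. simpl in Ht'. pose proof Hw as Hw2.
    destruct Hw2 as [_ [Ht _]]. pose proof (top_unique _ _ _ _ Ht' Ht) as E. subst m.
    apply in_map_iff. exists z. split; [reflexivity| apply HL; exact Hin'].
  - eauto.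
  - exists (pi w0). split. eauto. intros r [w' [Hw' ->]]. auto.
Qed.

Lemma pic_ge x y w : x <> y -> in_c d a Xn x y w -> pi w <= pi_c d a Xn par rho x y.
Proof. intros H Hw. destruct (pic_max x y H) as [_ Hm]. apply Hm. eauto. Qed.


Definition Mc : R := 2 * K0 / (1 - ep).

Lemma adj_pi V W : inSv V -> inSv W -> snd V = snd W ->
  d (fst V) (fst W) < lam * apow a (snd V) -> pi V <= K0 * pi W.
Proof. intros HV HW Hs Hd. destruct (adj_close V W HV HW Hs Hd) as [<-|H].
  pose proof (pi_pos V HV). nra. apply HH2; auto. Qed.

Lemma lam_bound c n : c < 6 -> c * apow a n <= lam * apow a n.
Proof. intros. pose proof (apow_pos n). apply Rmult_le_compat_r; lra. Qed.

Lemma thn_upper x y w n : in_c d a Xn x y w -> (snd w <= n)%nat -> thn n x y <= Mc * pi w.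
Proof.
  intros Hw Hn. destruct (c_props _ _ _ Hw) as [HwS [Hwx [Hwy _]]].
  set (m := snd w) in *.
  destruct (vert_at n x) as [u [Hu [Hsu Bx]]]. destruct (vert_at n y) as [u' [Hu' [Hsu' By]]].
  unfold Bv, mball in Bx, By. rewrite Hsu in Bx. rewrite Hsu' in By.
  set (k := (n - m)%nat).
  assert (sA : snd (anc par u k) = m) by (rewrite snd_anc; unfold k; lia).
  assert (sA' : snd (anc par u' k) = m) by (rewrite snd_anc; unfold k; lia).
  pose proof (anc_dist k m u Hu ltac:(unfold k; lia)) as D1.
  pose proof (anc_dist k m u' Hu' ltac:(unfold k; lia)) as D2.
  pose proof (apow_mono m n Hn). pose proof (apow_pos m).
  assert (E1 : d (fst (anc par u k)) (fst w) < 21/5 * apow a m).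
  { pose proof (d_tri (fst (anc par u k)) (fst u) (fst w)). pose proof (d_tri (fst u) x (fst w)).
    rewrite (d_sym (fst (anc par u k)) (fst u)) in H1. rewrite (d_sym x (fst w)) in H2. lra. }
  assert (E2 : d (fst (anc par u' k)) (fst w) < 21/5 * apow a m).
  { pose proof (d_tri (fst (anc par u' k)) (fst u') (fst w)). pose proof (d_tri (fst u') y (fst w)).
    rewrite (d_sym (fst (anc par u' k)) (fst u')) in H1. rewrite (d_sym y (fst w)) in H2. lra. }
  pose proof (lam_bound (21/5) m ltac:(lra)).
  assert (HA : inSv (anc par u k)) by (apply inS_anc; auto).
  assert (HA' : inSv (anc par u' k)) by (apply inS_anc; auto).
  assert (P1 : pi (anc par u k) <= K0 * pi w) by (apply adj_pi; auto; try rewrite sA; auto; lra).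
  assert (P2 : pi (anc par u' k) <= K0 * pi w) by (apply adj_pi; auto; try rewrite sA'; auto; lra).
  destruct (path_via n x y u u' k Hu Hu' Hsu Hsu') as [g [Hg HL]]; auto.
  { unfold Bv, mball. rewrite Hsu. auto. }
  { unfold Bv, mball. rewrite Hsu'. auto. }
  { unfold k; lia. }
  { destruct (classic (anc par u k = anc par u' k)) as [E|NE]; [left; auto|right].
    repeat split; auto. congruence. exists (fst w). unfold mball. rewrite sA, sA'. split; lra. }
  pose proof (thn_le n x y g Hg).
  assert ((pi (anc par u k) + pi (anc par u' k)) / (1 - ep) <= Mc * pi w).
  { unfold Mc. replace (2 * K0 / (1 - ep) * pi w) with ((K0 * pi w + K0 * pi w) / (1 - ep)) by (field; lra).
    unfold Rdiv. apply Rmult_le_compat_r. apply Rlt_le, Rinv_0_lt_compat; lra. lra. }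
  lra.
Qed.

Lemma thn_lower x y w : x <> y -> in_c d a Xn x y w -> exists n0, forall n, (n0 <= n)%nat -> pi w / K1 <= thn n x y.
Proof.
  intros Hxy Hw. destruct (HH3 x y Hxy) as [n0 [_ H]]. exists n0. intros n Hn.
  apply thn_ge. intros g Hg. specialize (H n g Hn Hg). pose proof (pic_ge x y w Hxy Hw).
  assert (pi w / K1 <= / K1 * pi_c d a Xn par rho x y).
  { unfold Rdiv. rewrite Rmult_comm. apply Rmult_le_compat_l; auto. apply Rlt_le, Rinv_0_lt_compat; lra. }
  lra.
Qed.

Lemma th_upper x y w : x <> y -> in_c d a Xn x y w -> th x y <= Mc * pi w.
Proof.
  intros Hxy Hw. unfold th. destruct excluded_middle_informative; [contradiction|].
  apply (lsup_upper _ Bth) with (snd w). intros; apply thn_bounds.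
  intros n0 Hn0. apply thn_upper; auto.
Qed.

Lemma th_lower x y w : x <> y -> in_c d a Xn x y w -> pi w / K1 <= th x y.
Proof.
  intros Hxy Hw. unfold th. destruct excluded_middle_informative; [contradiction|].
  destruct (thn_lower x y w Hxy Hw) as [n0 H].
  apply (lsup_lower _ Bth) with n0. intros; apply thn_bounds. auto.
Qed.

Lemma th_pos x y : x <> y -> 0 < th x y.
Proof.
  intros H. destruct (c_ex x y H) as [w Hw]. pose proof (th_lower x y w H Hw).
  destruct (c_props _ _ _ Hw) as [HwS _]. pose proof (pi_pos w HwS).
  assert (0 < pi w / K1) by (apply Rdiv_lt_0_compat; lra). lra.
Qed.

Lemma th_metric : is_metric th.
Proof.
  split; [|split; [|split]].
  - apply th_nn.
  - intros x y; split. intros H. apply NNPP. intros Hne. pose proof (th_pos x y Hne). lra.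
    intros ->. apply th_xx.
  - apply th_sym.
  - apply th_tri.
Qed.


Lemma exp_mono x y : x <= y -> exp x <= exp y.
Proof. intros [H|H]. apply Rlt_le, exp_increasing; auto. subst; lra. Qed.

Lemma ln_le x y : 0 < x -> x <= y -> ln x <= ln y.
Proof. intros H [H1|H1]. apply Rlt_le, ln_increasing; auto. subst; lra. Qed.

Lemma pow_le1 x n : 0 <= x <= 1 -> x ^ n <= 1.
Proof. intros H. induction n; simpl. lra. assert (0 <= x ^ n) by (apply pow_le; lra). nra. Qed.

Lemma pow_decr x m n : 0 < x <= 1 -> (m <= n)%nat -> x ^ n <= x ^ m.
Proof.
  intros Hx H. replace n with (m + (n - m))%nat by lia. rewrite pow_add.
  assert (0 <= x ^ m) by (apply pow_le; lra).
  assert (x ^ (n - m) <= 1) by (apply pow_le1; lra). nra.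
Qed.

Lemma pow_exp x k : 0 < x -> x ^ k = exp (INR k * ln x).
Proof. intros H. rewrite <- Rpower_pow; auto. Qed.

Lemma rpow_pos t s : 0 < t -> rpow t s = Rpower t s.
Proof. intros H. unfold rpow. destruct Req_EM_T; [lra|auto]. Qed.

Lemma etaf_nn C al t : 0 <= C -> 0 <= etaf C al t.
Proof.
  intros HC. unfold etaf. apply Rmult_le_pos; auto. eapply Rle_trans; [|apply Rmax_l].
  unfold rpow. destruct Req_EM_T; [lra|]. unfold Rpower. apply Rlt_le, exp_pos.
Qed.

Definition La : R := ln a.
Definition Le : R := - ln ep.
Definition Lm : R := - ln em.
Definition L4 : R := ln (4 * a).
Definition alq : R := 1 + La / Le + Lm / La.
Definition R0q : R := Mc * K1 * K0 / em.
Definition Cq : R := R0q * (4 * a) * Rpower (4 * a) alq.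

Lemma La_pos : 0 < La. Proof. unfold La. rewrite <- ln_1. apply ln_increasing; lra. Qed.
Lemma Le_pos : 0 < Le. Proof. unfold Le. assert (ln ep < ln 1) by (apply ln_increasing; lra). rewrite ln_1 in H. lra. Qed.
Lemma Lm_nn : 0 <= Lm. Proof. unfold Lm. assert (ln em < ln 1) by (apply ln_increasing; lra). rewrite ln_1 in H. lra. Qed.
Lemma L4_pos : 0 < L4. Proof. unfold L4. rewrite <- ln_1. apply ln_increasing; lra. Qed.
Lemma alq_ge1 : 1 <= alq.
Proof. unfold alq. pose proof La_pos. pose proof Le_pos. pose proof Lm_nn.
  assert (0 <= La / Le) by (apply Rlt_le, Rdiv_lt_0_compat; auto).
  assert (0 <= Lm / La) by (apply Rmult_le_pos; [lra| apply Rlt_le, Rinv_0_lt_compat; auto]). lra. Qed.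
Lemma alq_Le : La <= alq * Le.
Proof. unfold alq. pose proof La_pos. pose proof Le_pos. pose proof Lm_nn.
  assert (0 <= Lm / La) by (apply Rmult_le_pos; [lra| apply Rlt_le, Rinv_0_lt_compat; auto]).
  assert (La / Le * Le = La) by (field; lra). nra. Qed.
Lemma alq_La : Lm <= alq * La.
Proof. unfold alq. pose proof La_pos. pose proof Le_pos. pose proof Lm_nn.
  assert (0 <= La / Le) by (apply Rlt_le, Rdiv_lt_0_compat; auto).
  assert (Lm / La * La = Lm) by (field; lra). nra. Qed.

Lemma em_le1 : em <= 1. Proof. lra. Qed.

Lemma R0q_pos : 0 < R0q.
Proof. unfold R0q, Mc. apply Rdiv_lt_0_compat; auto. apply Rmult_lt_0_compat; [|lra].
  apply Rmult_lt_0_compat; [|lra]. apply Rdiv_lt_0_compat; lra. Qed.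

Lemma Cq_ge1 : 1 <= Cq.
Proof.
  unfold Cq. assert (1 <= R0q).
  { unfold R0q, Mc. assert (1 <= 2 * K0 / (1 - ep)).
    { apply (Rmult_le_reg_r (1 - ep)). lra. field_simplify; lra. }
    assert (1 <= 2 * K0 / (1 - ep) * K1) by (apply Rle_trans with (1*1); [lra| apply Rmult_le_compat; lra]).
    assert (1 <= 2 * K0 / (1 - ep) * K1 * K0) by (apply Rle_trans with (1*1); [lra| apply Rmult_le_compat; lra]).
    apply (Rmult_le_reg_r em); auto.
    replace (2 * K0 / (1 - ep) * K1 * K0 / em * em) with (2 * K0 / (1 - ep) * K1 * K0) by (field; lra). lra. }
  assert (1 <= Rpower (4 * a) alq).
  { rewrite <- (Rpower_O (4 * a)) by lra. apply Rle_Rpower; try lra. pose proof alq_ge1; lra. }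
  assert (1 <= 4 * a) by lra.
  assert (1 <= R0q * (4 * a)) by nra. nra.
Qed.

Lemma ln_apow k : ln (apow a k) = - INR k * La.
Proof. unfold apow, La. rewrite ln_Rinv by (apply pow_lt; lra). rewrite ln_pow by lra. ring. Qed.

Lemma qs_bound x a' b : x <> b -> th x a' / th x b <= etaf Cq alq (d x a' / d x b).
Proof.
  intros Hxb.
  destruct (classic (x = a')) as [<-|Hxa].
  - rewrite th_xx, d_xx. unfold Rdiv. rewrite !Rmult_0_l. apply etaf_nn. pose proof Cq_ge1; lra.
  - destruct (c_ex x a' Hxa) as [wa Hwa]. destruct (c_ex x b Hxb) as [wb Hwb].
    destruct (c_props _ _ _ Hwa) as [HwaS [Hwa1 [Hwa2 _]]].
    destruct (c_props _ _ _ Hwb) as [HwbS [Hwb1 [Hwb2 _]]].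
    set (na := snd wa) in *. set (nb := snd wb) in *.
    pose proof (th_upper x a' wa Hxa Hwa) as T1.
    pose proof (th_lower x b wb Hxb Hwb) as T2.
    pose proof (pi_pos wa HwaS) as Pa. pose proof (pi_pos wb HwbS) as Pb.
    pose proof (c_lower x a' wa Hwa) as D1. pose proof (c_upper x b wb Hwb) as D2.
    fold na in D1. fold nb in D2.
    assert (Hdb : 0 < d x b) by (pose proof (c_lower x b wb Hwb) as HH; fold nb in HH; pose proof (apow_pos (S nb)); lra).
    set (t := d x a' / d x b).
    assert (Ht : apow a (S na) / (4 * apow a nb) <= t).
    { unfold t. pose proof (apow_pos (S na)). pose proof (apow_pos nb).
      unfold Rdiv. apply Rlt_le. apply Rle_lt_trans with (apow a (S na) * / d x b).
      apply Rmult_le_compat_l; [lra|]. apply Rinv_le_contravar; lra.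
      apply Rmult_lt_compat_r; [apply Rinv_0_lt_compat|]; lra. }
    assert (Htpos : 0 < t) by (unfold t; apply Rdiv_lt_0_compat; [pose proof (apow_pos (S na)); lra|lra]).
    assert (Hthb : 0 < th x b) by (apply th_pos; auto).
    assert (Rat : th x a' / th x b <= Mc * K1 * (pi wa / pi wb)).
    { assert (pi wb / K1 <= th x b) by auto.
      apply Rle_trans with (Mc * pi wa / (pi wb / K1)).
      - unfold Rdiv. apply Rmult_le_compat. apply th_nn. apply Rlt_le, Rinv_0_lt_compat; auto. auto.
        apply Rinv_le_contravar; auto. apply Rdiv_lt_0_compat; lra.
      - right. field. split; lra. }
    set (j := (Nat.min na nb - 1)%nat).
    assert (Hcmp : pi wa <= K0 * ep ^ (na - j) / em ^ (nb - j) * pi wb).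
    { apply cmp; auto; try (unfold j; lia).
      pose proof (d_tri (fst wa) x (fst wb)). rewrite (d_sym x (fst wb)) in H.
      destruct (Nat.eq_dec (Nat.min na nb) 0) as [E|E].
      - unfold j. rewrite E. simpl. rewrite apow_0. pose proof (Hdiam (fst wa) (fst wb)). lra.
      - assert (apow a na <= apow a (Nat.min na nb)) by (apply apow_mono; lia).
        assert (apow a nb <= apow a (Nat.min na nb)) by (apply apow_mono; lia).
        assert (apow a (Nat.min na nb) = apow a j / a).
        { replace (Nat.min na nb) with (S j) by (unfold j; lia). apply apow_S. }
        pose proof (apow_pos j).
        assert (apow a j / a <= apow a j / 6).
        { unfold Rdiv. apply Rmult_le_compat_l; [lra|]. apply Rinv_le_contravar; lra. }
        lra. }
    assert (Hq : pi wa / pi wb <= K0 * ep ^ (na - j) / em ^ (nb - j)).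
    { apply (Rmult_le_reg_r (pi wb)); auto. field_simplify; try lra.
      replace (pi wa) with (pi wa / 1) in Hcmp by field. 
      assert (0 < em ^ (nb - j)) by (apply pow_lt; lra). unfold Rdiv in *. lra. }
    assert (HR0 : Mc * K1 * K0 = R0q * em) by (unfold R0q; field; lra).
    assert (Hmc : 0 < Mc * K1) by (unfold Mc; apply Rmult_lt_0_compat; [apply Rdiv_lt_0_compat|]; lra).
    unfold etaf. rewrite !rpow_pos by auto.
    destruct (Compare_dec.le_lt_dec nb na) as [Hab|Hab].
    +
      set (k := (na - nb)%nat).
      assert (Hq' : pi wa / pi wb <= K0 * ep ^ k / em).
      { eapply Rle_trans; [exact Hq|]. unfold Rdiv.
        assert (ep ^ (na - j) <= ep ^ k) by (apply pow_decr; [lra|unfold k, j; lia]).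
        assert (em <= em ^ (nb - j)).
        { destruct (Nat.eq_dec (nb - j) 0) as [E|E]. 
          - rewrite E; simpl; lra.
          - replace (nb - j)%nat with 1%nat by (unfold j; lia). simpl; lra. }
        assert (0 < em ^ (nb - j)) by (apply pow_lt; lra).
        assert (/ em ^ (nb - j) <= / em) by (apply Rinv_le_contravar; lra).
        assert (0 <= ep ^ k) by (apply pow_le; lra).
        apply Rmult_le_compat.
        - apply Rmult_le_pos; [lra| apply pow_le; lra].
        - apply Rlt_le, Rinv_0_lt_compat; auto.
        - apply Rmult_le_compat_l; lra.
        - auto. }
      assert (Hb0 : apow a (S na) / (4 * apow a nb) = apow a k / (4 * a)).
      { replace na with (nb + k)%nat by (unfold k; lia). rewrite apow_S, apow_add.
        field. split; [lra|]. pose proof (apow_pos nb); lra. }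
      rewrite Hb0 in Ht.
      assert (Hb0p : 0 < apow a k / (4 * a)) by (apply Rdiv_lt_0_compat; [apply apow_pos|lra]).
      assert (Hlnt : - INR k * La - L4 <= ln t).
      { assert (ln (apow a k / (4 * a)) <= ln t) by (apply ln_le; auto).
        unfold Rdiv in H. rewrite ln_mult, ln_Rinv, ln_apow in H; try lra. fold L4 in H. lra.
        apply apow_pos. apply Rinv_0_lt_compat; lra. }
      assert (Hkey : ep ^ k <= 4 * a * Rpower (4 * a) alq * Rpower t (/ alq)).
      { rewrite pow_exp by lra. unfold Rpower. 
        replace (4 * a) with (exp L4) at 1 by (unfold L4; apply exp_ln; lra).
        rewrite <- !exp_plus. apply exp_mono. fold L4.
        pose proof alq_ge1. pose proof alq_Le. pose proof La_pos. pose proof Le_pos. pose proof L4_pos.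
        assert (0 < / alq) by (apply Rinv_0_lt_compat; lra).
        assert (/ alq <= 1) by (rewrite <- Rinv_1; apply Rinv_le_contravar; lra).
        assert (Hs : / alq * La <= Le).
        { apply (Rmult_le_reg_l alq); [lra|]. rewrite <- Rmult_assoc, Rinv_r by lra. lra. }
        assert (0 <= INR k) by apply pos_INR.
        assert (E1 : INR k * ln ep = - (INR k * Le)) by (unfold Le; ring).
        assert (F1 : / alq * ln t >= / alq * (- INR k * La - L4)) by (apply Rle_ge, Rmult_le_compat_l; lra).
        assert (F1' : / alq * (- INR k * La - L4) = - (INR k * (/ alq * La)) - / alq * L4) by ring.
        assert (F2 : INR k * (/ alq * La) <= INR k * Le) by (apply Rmult_le_compat_l; lra).
        assert (F3 : alq * L4 >= / alq * L4) by (apply Rle_ge, Rmult_le_compat_r; lra).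
        lra. }
      apply Rle_trans with (Mc * K1 * (K0 * ep ^ k / em)).
      { eapply Rle_trans; [exact Rat|]. apply Rmult_le_compat_l; lra. }
      apply Rle_trans with (Cq * Rpower t (/ alq)); [|apply Rmult_le_compat_l; [pose proof Cq_ge1; lra| apply Rmax_r]].
      unfold Cq. replace (Mc * K1 * (K0 * ep ^ k / em)) with (R0q * ep ^ k) by (unfold R0q; field; lra).
      pose proof R0q_pos. 
      replace (R0q * (4 * a) * Rpower (4 * a) alq * Rpower t (/ alq)) with (R0q * (4 * a * Rpower (4 * a) alq * Rpower t (/ alq))) by ring.
      apply Rmult_le_compat_l; lra.
    +
      set (k := (nb - na)%nat).
      assert (Hq' : pi wa / pi wb <= K0 / em ^ (S k)).
      { eapply Rle_trans; [exact Hq|]. unfold Rdiv.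
        assert (ep ^ (na - j) <= 1) by (apply pow_le1; lra).
        assert (em ^ (S k) <= em ^ (nb - j)) by (apply pow_decr; [lra|unfold k, j; lia]).
        assert (0 < em ^ (S k)) by (apply pow_lt; lra).
        assert (/ em ^ (nb - j) <= / em ^ (S k)) by (apply Rinv_le_contravar; lra).
        assert (0 <= ep ^ (na - j)) by (apply pow_le; lra).
        assert (0 < / em ^ (nb - j)) by (apply Rinv_0_lt_compat, pow_lt; lra).
        assert (K0 * ep ^ (na - j) <= K0) by nra. nra. }
      assert (Hb0 : apow a (S na) / (4 * apow a nb) = / apow a k / (4 * a)).
      { replace nb with (na + k)%nat by (unfold k; lia). rewrite apow_S, apow_add.
        pose proof (apow_pos na). pose proof (apow_pos k). field. lra. }
      rewrite Hb0 in Ht.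
      assert (Hb0p : 0 < / apow a k / (4 * a)) by (apply Rdiv_lt_0_compat; [apply Rinv_0_lt_compat, apow_pos|lra]).
      assert (Hlnt : INR k * La - L4 <= ln t).
      { assert (ln (/ apow a k / (4 * a)) <= ln t) by (apply ln_le; auto).
        unfold Rdiv in H. rewrite ln_mult, !ln_Rinv, ln_apow in H; try lra. fold L4 in H. lra.
        apply apow_pos. apply Rinv_0_lt_compat, apow_pos. apply Rinv_0_lt_compat; lra. }
      assert (Hkey : / em ^ k <= 4 * a * Rpower (4 * a) alq * Rpower t alq).
      { rewrite pow_exp by lra. rewrite <- exp_Ropp. unfold Rpower.
        replace (4 * a) with (exp L4) at 1 by (unfold L4; apply exp_ln; lra).
        rewrite <- !exp_plus. apply exp_mono. fold L4.
        pose proof alq_ge1. pose proof alq_La. pose proof La_pos. pose proof Lm_nn. pose proof L4_pos.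
        assert (0 <= INR k) by apply pos_INR.
        assert (alq * ln t >= alq * (INR k * La - L4)) by (apply Rle_ge, Rmult_le_compat_l; lra).
        assert (INR k * Lm <= INR k * (alq * La)) by (apply Rmult_le_compat_l; lra).
        unfold Lm in *. nra. }
      apply Rle_trans with (Mc * K1 * (K0 / em ^ (S k))).
      { eapply Rle_trans; [exact Rat|]. apply Rmult_le_compat_l; lra. }
      apply Rle_trans with (Cq * Rpower t alq); [|apply Rmult_le_compat_l; [pose proof Cq_ge1; lra| apply Rmax_l]].
      unfold Cq. replace (Mc * K1 * (K0 / em ^ (S k))) with (R0q * / em ^ k).
      2:{ unfold R0q. simpl. field. split; [apply pow_nonzero|]; lra. }
      pose proof R0q_pos.
      replace (R0q * (4 * a) * Rpower (4 * a) alq * Rpower t alq) with (R0q * (4 * a * Rpower (4 * a) alq * Rpower t alq)) by ring.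
      apply Rmult_le_compat_l; lra.
Qed.

Lemma th_inJ : in_J d th.
Proof.
  exists Cq, alq. split. apply Cq_ge1. split. apply alq_ge1.
  intros x a' b H. apply qs_bound; auto.
Qed.


Definition Gm x Rad m := exists q, inSv q /\ snd q = m /\ d (fst q) x < apow a m /\ Rad <= pi q.

Lemma ep_pow_small eps : 0 < eps -> exists n, ep ^ n < eps.
Proof.
  intros He. destruct (pow_lt_1_zero ep ltac:(rewrite Rabs_right; lra) eps He) as [N HN].
  exists N. specialize (HN N (le_n _)). rewrite Rabs_right in HN; auto. apply Rle_ge, pow_le; lra.
Qed.

Lemma choose_m x Rad : 0 < Rad -> exists m, (m = 0%nat \/ Gm x Rad m) /\
  exists q', inSv q' /\ (snd q' = m \/ snd q' = S m) /\ d (fst q') x < apow a (snd q') /\ pi q' < Rad.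
Proof.
  intros HR. destruct (classic (Gm x Rad 0)) as [G0|G0].
  - destruct (ep_pow_small Rad HR) as [B HB].
    assert (Hex : exists n, Gm x Rad n) by eauto.
    assert (Hb : forall n, Gm x Rad n -> (n <= B)%nat).
    { intros n [q [Hq [Hs [_ Hp']]]]. apply Nat.nlt_ge. intros Hlt.
      pose proof (pi_le_ep q Hq) as H. rewrite Hs in H.
      pose proof (pow_decr ep B n ltac:(lra) ltac:(lia)). lra. }
    destruct (nat_max _ B Hex Hb) as [m [Hm Hmax]].
    exists m. split; auto.
    destruct (vert_at (S m) x) as [q' [Hq' [Hs' B']]]. exists q'. split; auto. split; auto.
    unfold Bv, mball in B'. split. auto.
    apply Rnot_le_lt. intros Hle. assert (S m <= m)%nat; [|lia]. apply Hmax. exists q'.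
    rewrite Hs' in B'. repeat split; auto.
  - exists O. split; [left; reflexivity|]. exists (x0, 0%nat). split. apply v0_in. split; auto. split.
    simpl. rewrite apow_0. pose proof (Hdiam x0 x). lra.
    apply Rnot_le_lt. intros Hle. apply G0. exists (x0, 0%nat). split. apply v0_in. split; auto.
    split; auto. simpl. rewrite apow_0. pose proof (Hdiam x0 x). lra.
Qed.

Lemma claim1 x Rad m j0 y : 0 < Rad -> ep ^ j0 < / (K0 * K1) -> (m = 0%nat \/ Gm x Rad m) ->
  th x y < Rad -> d x y < 4 * apow a (m - j0).
Proof.
  intros HR Hj0 HG Hth.
  destruct (classic (x = y)) as [<-|Hxy]. rewrite d_xx. pose proof (apow_pos (m - j0)). lra.
  destruct HG as [->|[q [Hq [Hsq [Hdq Hpq]]]]].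
  { simpl. rewrite apow_0. pose proof (Hdiam x y). lra. }
  destruct (c_ex x y Hxy) as [w Hw]. pose proof (c_upper x y w Hw) as Hu.
  destruct (c_props _ _ _ Hw) as [HwS [Hwx _]].
  destruct (Compare_dec.le_lt_dec (m - j0) (snd w)) as [Hle|Hlt].
  - pose proof (apow_mono _ _ Hle). lra.
  - exfalso. pose proof (th_lower x y w Hxy Hw) as Hl.
    assert (Hc : pi q <= K0 * ep ^ (snd q - snd w) / em ^ (snd w - snd w) * pi w).
    { apply cmp; auto; try lia. pose proof (d_tri (fst q) x (fst w)). rewrite (d_sym x (fst w)) in H.
      pose proof (apow_mono (snd w) m ltac:(lia)). pose proof (apow_pos (snd w)). lra. }
    rewrite Nat.sub_diag in Hc. simpl in Hc.
    assert (ep ^ (snd q - snd w) <= ep ^ j0) by (apply pow_decr; lia || lra).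
    pose proof (pi_pos w HwS). pose proof (pi_pos q Hq).
    assert (pi w < K1 * Rad).
    { apply (Rmult_lt_reg_r (/ K1)). apply Rinv_0_lt_compat; lra.
      replace (K1 * Rad * / K1) with Rad by (field; lra). unfold Rdiv in Hl. lra. }
    assert (0 <= ep ^ (snd q - snd w)) by (apply pow_le; lra).
    replace (K0 * ep ^ (snd q - snd w) / 1) with (K0 * ep ^ (snd q - snd w)) in Hc by field.
    assert (K0 * ep ^ (snd q - snd w) * pi w <= K0 * ep ^ j0 * pi w).
    { apply Rmult_le_compat_r; [lra|apply Rmult_le_compat_l; lra]. }
    assert (K0 * ep ^ j0 < / K1).
    { apply (Rmult_lt_reg_l (/ K0)). apply Rinv_0_lt_compat; lra.
      rewrite <- Rmult_assoc, Rinv_l, Rmult_1_l by lra. rewrite <- Rinv_mult. auto. }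
    assert (K0 * ep ^ j0 * pi w <= / K1 * pi w) by (apply Rmult_le_compat_r; lra).
    assert (/ K1 * pi w < / K1 * (K1 * Rad)) by (apply Rmult_lt_compat_l; [apply Rinv_0_lt_compat; lra|lra]).
    replace (/ K1 * (K1 * Rad)) with Rad in * by (field; lra).
    lra.
Qed.


Lemma apow_sub m j0 : apow a (m - j0) <= a ^ j0 * apow a m.
Proof.
  destruct (Compare_dec.le_lt_dec j0 m) as [H|H].
  - replace m with ((m - j0) + j0)%nat at 2 by lia. rewrite apow_add.
    assert (0 < a ^ j0) by (apply pow_lt; lra).
    assert (H1 : a ^ j0 * apow a j0 = 1) by (unfold apow; field; lra).
    replace (a ^ j0 * (apow a (m - j0) * apow a j0)) with (apow a (m - j0) * (a ^ j0 * apow a j0)) by ring.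
    rewrite H1. lra.
  - replace (m - j0)%nat with 0%nat by lia. rewrite apow_0. unfold apow.
    replace j0 with (m + (j0 - m))%nat by lia. rewrite pow_add.
    assert (0 < a ^ m) by (apply pow_lt; lra). assert (1 <= a ^ (j0 - m)) by (apply pow_R1_Rle; lra).
    replace (a ^ m * a ^ (j0 - m) * / a ^ m) with (a ^ (j0 - m)) by (field; lra). lra.
Qed.

Lemma claim2 x Rad m j0 t q' : inSv t -> snd t = m -> d (fst t) x < 7 * apow a (m - j0) ->
  inSv q' -> (snd q' = m \/ snd q' = S m) -> d (fst q') x < apow a (snd q') -> pi q' < Rad ->
  pi t <= K0 / em ^ (j0 + 2) * Rad.
Proof.
  intros Ht Hst Hdt Hq Hsq Hdq Hpq.
  set (j := (m - j0 - 1)%nat).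
  assert (Hc : pi t <= K0 * ep ^ (snd t - j) / em ^ (snd q' - j) * pi q').
  { apply cmp; auto; try (unfold j; lia).
    pose proof (d_tri (fst t) x (fst q')). rewrite (d_sym x (fst q')) in H.
    assert (apow a (snd q') <= apow a (m - j0)) by (apply apow_mono; lia).
    destruct (Nat.eq_dec (m - j0) 0) as [E|E].
    - unfold j. rewrite E. simpl. rewrite apow_0. pose proof (Hdiam (fst t) (fst q')). lra.
    - assert (apow a (m - j0) = apow a j / a) by (replace (m - j0)%nat with (S j) by (unfold j; lia); apply apow_S).
      pose proof (apow_pos j).
      assert (apow a j / a <= apow a j / 6) by (unfold Rdiv; apply Rmult_le_compat_l; [lra|apply Rinv_le_contravar; lra]).
      lra. }
  assert (ep ^ (snd t - j) <= 1) by (apply pow_le1; lra).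
  assert (em ^ (j0 + 2) <= em ^ (snd q' - j)) by (apply pow_decr; [lra|unfold j; lia]).
  assert (0 < em ^ (j0 + 2)) by (apply pow_lt; lra).
  assert (0 <= ep ^ (snd t - j)) by (apply pow_le; lra).
  pose proof (pi_pos q' Hq).
  assert (K0 * ep ^ (snd t - j) / em ^ (snd q' - j) <= K0 / em ^ (j0 + 2)).
  { unfold Rdiv. apply Rmult_le_compat; try lra. apply Rmult_le_pos; lra.
    apply Rlt_le, Rinv_0_lt_compat, pow_lt; lra. 
    assert (K0 * ep ^ (snd t - j) <= K0 * 1) by (apply Rmult_le_compat_l; lra). lra.
    apply Rinv_le_contravar; lra. }
  assert (0 < K0 / em ^ (j0 + 2)) by (apply Rdiv_lt_0_compat; lra).
  assert (K0 * ep ^ (snd t - j) / em ^ (snd q' - j) * pi q' <= K0 / em ^ (j0 + 2) * pi q') by (apply Rmult_le_compat_r; lra).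
  assert (K0 / em ^ (j0 + 2) * pi q' <= K0 / em ^ (j0 + 2) * Rad) by (apply Rmult_le_compat_l; lra).
  lra.
Qed.

Definition Stop (rr : R) (t s : V X) : Prop :=
  inSv s /\ ((s = t /\ pi t < rr) \/
   ((snd t < snd s)%nat /\ anc par s (snd s - snd t) = t /\ pi s < rr /\ rr <= pi (parentV par s))).

Definition rrof (r : R) : R := r * em / (Mc * K0).

Lemma Mc_pos : 0 < Mc. Proof. unfold Mc. apply Rdiv_lt_0_compat; lra. Qed.

Lemma claim4 x Rad r m j0 y : 0 < Rad -> 0 < r -> ep ^ j0 < / (K0 * K1) -> (m = 0%nat \/ Gm x Rad m) ->
  th x y < Rad -> exists t s, inSv t /\ snd t = m /\ d (fst t) x < 7 * apow a (m - j0) /\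
     Stop (rrof r) t s /\ th (fst s) y < r.
Proof.
  intros HR Hr Hj0 HG Hth.
  pose proof (claim1 x Rad m j0 y HR Hj0 HG Hth) as Hxy.
  set (rr := rrof r).
  assert (Hrr : 0 < rr) by (unfold rr, rrof; pose proof Mc_pos; apply Rdiv_lt_0_compat; nra).
  destruct (ep_pow_small rr Hrr) as [N1 HN1].
  set (N := Nat.max N1 m).
  destruct (vert_at N y) as [u [Hu [Hsu Buy]]]. unfold Bv, mball in Buy. rewrite Hsu in Buy.
  set (P := fun i => (i <= N - m)%nat /\ pi (anc par u i) < rr).
  assert (P0 : P 0%nat).
  { split. lia. simpl. pose proof (pi_le_ep u Hu). rewrite Hsu in H.
    pose proof (pow_decr ep N1 N ltac:(lra) ltac:(unfold N; lia)). lra. }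
  destruct (nat_max P (N - m) ltac:(eauto) ltac:(intros n [Hn _]; auto)) as [i [[Hi Hpi] Hmax]].
  set (t := anc par u (N - m)). set (s := anc par u i).
  assert (Ht : inSv t) by (apply inS_anc; auto).
  assert (Hst : snd t = m) by (unfold t; rewrite snd_anc; unfold N in *; lia).
  assert (Hs : inSv s) by (apply inS_anc; auto).
  assert (Hss : snd s = (N - i)%nat) by (unfold s; rewrite snd_anc; lia).
  exists t, s. split; auto. split; auto. split.
  { pose proof (anc_dist (N - m) m u Hu ltac:(unfold N in *; lia)) as D. fold t in D.
    pose proof (d_tri (fst t) (fst u) x). pose proof (d_tri (fst u) y x).
    rewrite (d_sym (fst t) (fst u)) in H. rewrite (d_sym y x) in H0.
    pose proof (apow_mono (m - j0) m ltac:(lia)). pose proof (apow_mono m N ltac:(unfold N; lia)).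
    pose proof (apow_pos (m - j0)). lra. }
  split.
  { split; auto. destruct (Nat.eq_dec i (N - m)) as [E|E].
    - left. unfold s, t. rewrite <- E. split; auto.
    - right. split; [lia|]. split.
      + rewrite Hss, Hst. unfold s. rewrite anc_add. unfold t. f_equal. lia.
      + split; auto. unfold s. rewrite <- anc_S. apply Rnot_lt_le. intros Hl.
        assert (S i <= i)%nat; [|lia]. apply Hmax. split; auto. lia. }
  destruct (classic (fst s = y)) as [E|Hne].
  { rewrite E, th_xx. lra. }
  destruct (c_ex (fst s) y Hne) as [w Hw].
  destruct (c_props _ _ _ Hw) as [HwS [Hws _]].
  pose proof (c_lower _ _ _ Hw) as Dl.
  assert (Dsy : d (fst s) y <= 11/5 * apow a (snd s)).
  { pose proof (anc_dist i (snd s) u Hu ltac:(lia)) as D. fold s in D.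
    pose proof (d_tri (fst s) (fst u) y). rewrite (d_sym (fst s) (fst u)) in H.
    pose proof (apow_mono (snd s) N ltac:(lia)). lra. }
  assert (Hlev : (snd s <= S (snd w))%nat).
  { apply Nat.nlt_ge. intros Hlt. pose proof (apow_mono (S (S (snd w))) (snd s) ltac:(lia)).
    pose proof (apow_S_le (S (snd w))). pose proof (apow_pos (S (snd w))). lra. }
  set (j := (snd s - 1)%nat).
  assert (Hc : pi w <= K0 * ep ^ (snd w - j) / em ^ (snd s - j) * pi s).
  { apply cmp; auto; try (unfold j; lia).
    pose proof (apow_mono j (snd w) ltac:(unfold j; lia)). pose proof (apow_pos j). lra. }
  assert (ep ^ (snd w - j) <= 1) by (apply pow_le1; lra).
  assert (em <= em ^ (snd s - j)).
  { destruct (Nat.eq_dec (snd s - j) 0) as [E|E]. rewrite E; simpl; lra.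
    replace (snd s - j)%nat with 1%nat by (unfold j; lia). simpl; lra. }
  pose proof (pi_pos s Hs). pose proof (pi_pos w HwS).
  assert (0 <= ep ^ (snd w - j)) by (apply pow_le; lra).
  assert (0 < em ^ (snd s - j)) by (apply pow_lt; lra).
  assert (Hpw : pi w <= K0 / em * pi s).
  { eapply Rle_trans; [exact Hc|]. apply Rmult_le_compat_r; [lra|]. unfold Rdiv.
    apply Rmult_le_compat. apply Rmult_le_pos; lra. apply Rlt_le, Rinv_0_lt_compat; lra.
    assert (K0 * ep ^ (snd w - j) <= K0 * 1) by (apply Rmult_le_compat_l; lra). lra.
    apply Rinv_le_contravar; lra. }
  pose proof (th_upper (fst s) y w Hne Hw).
  assert (pi s < rr) by (destruct (Nat.eq_dec i (N - m)); auto).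
  assert (Mc * (K0 / em * pi s) < Mc * (K0 / em * rr)).
  { pose proof Mc_pos. apply Rmult_lt_compat_l; auto. apply Rmult_lt_compat_l; auto. apply Rdiv_lt_0_compat; lra. }
  assert (Mc * (K0 / em * rr) = r) by (unfold rr, rrof; pose proof Mc_pos; field; lra).
  pose proof Mc_pos.
  assert (Mc * pi w <= Mc * (K0 / em * pi s)) by (apply Rmult_le_compat_l; lra).
  lra.
Qed.


Lemma stop_level rr t s CTR L : inSv t -> Stop rr t s -> pi t <= CTR -> 0 < CTR ->
  ep ^ L < rr / CTR -> (snd s <= snd t + L)%nat.
Proof.
  intros Ht [Hs [[-> _]|[Hlt [Ha [Hps Hpp]]]]] HpT HC HL. lia.
  apply Nat.nlt_ge. intros Hgt.
  set (k := (snd s - 1 - snd t)%nat).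
  assert (Hpar : inSv (parentV par s)) by (apply inS_parentV; auto).
  pose proof (pi_anc_up k (parentV par s) Hpar ltac:(rewrite snd_parentV; unfold k; lia)) as U.
  assert (anc par (parentV par s) k = t).
  { rewrite <- Ha. rewrite <- anc_S'. f_equal. unfold k; lia. }
  rewrite H in U.
  assert (ep ^ k <= ep ^ L) by (apply pow_decr; [lra|unfold k; lia]).
  assert (0 <= ep ^ k) by (apply pow_le; lra). pose proof (pi_pos t Ht).
  assert (ep ^ k * pi t <= ep ^ L * CTR) by (apply Rmult_le_compat; lra).
  assert (ep ^ L * CTR < rr) by (apply (Rmult_lt_reg_r (/ CTR)); [apply Rinv_0_lt_compat; lra|];
     replace (ep ^ L * CTR * / CTR) with (ep ^ L) by (field; lra); exact HL).
  lra.
Qed.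

Lemma nodup_sel (P : X -> Prop) (E : list X) : exists L, NoDup L /\ forall z, In z L <-> (In z E /\ P z).
Proof.
  induction E as [|e E IH].
  - exists []. split. constructor. intros z; simpl; tauto.
  - destruct IH as [L [HN HL]].
    destruct (classic (P e /\ ~ In e L)) as [[Pe Ne]|Hn].
    + exists (e :: L). split. constructor; auto. intros z. simpl. rewrite HL.
      split. intros [<-|[? ?]]; auto. intros [[<-|?] ?]; auto.
    + exists L. split; auto. intros z. split.
      * intros Hz. apply HL in Hz. destruct Hz. split; [right|]; auto.
      * intros [[<-|Hz] Pz].
        -- apply NNPP. intros Hni. apply Hn. split; auto.
        -- apply HL; auto.
Qed.

Lemma nodup_map_pair (L : list X) (k : nat) : NoDup L -> NoDup (map (fun z => (z, k)) L).
Proof.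
  induction 1; simpl; constructor; auto.
  intros Hin. apply in_map_iff in Hin. destruct Hin as [z [E Hz]]. inversion E; subst. contradiction.
Qed.

Lemma sum_lower (l : list (V X)) (f : V X -> R) c : (forall w, In w l -> c <= f w) ->
  INR (length l) * c <= fold_right (fun w s => f w + s) 0 l.
Proof.
  induction l as [|w l IH]; intros H. simpl; lra.
  simpl length. rewrite S_INR. simpl. assert (c <= f w) by (apply H; left; auto).
  assert (INR (length l) * c <= fold_right (fun w s => f w + s) 0 l) by (apply IH; intros; apply H; right; auto).
  lra.
Qed.

Lemma Rpower_div x y s : 0 < x -> 0 < y -> Rpower (x / y) s = Rpower x s / Rpower y s.
Proof.
  intros Hx Hy. unfold Rdiv. rewrite <- Rpower_mult_distr by (auto; apply Rinv_0_lt_compat; auto).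
  f_equal. unfold Rpower. rewrite ln_Rinv by auto. rewrite <- exp_Ropp. f_equal. ring.
Qed.

Lemma count_level rr t k Q : 0 < rr -> inSv t -> (snd t < k)%nat ->
  Rpower (pi t / (em * rr)) p <= Q ->
  exists l : list X, INR (length l) <= Q /\ forall s, Stop rr t s -> snd s = k -> In (fst s) l.
Proof.
  intros Hrr Ht Hk HQ.
  destruct (enum k) as [E HE].
  destruct (nodup_sel (fun z => Stop rr t (z, k)) E) as [L [HN HL]].
  exists L. split.
  - set (ws := map (fun z => (z, k)) L).
    assert (Hws : NoDup ws).
    { apply nodup_map_pair; auto. }
    assert (Hst : forall w, In w ws -> Stop rr t w /\ snd w = k).
    { intros w Hw. unfold ws in Hw. apply in_map_iff in Hw. destruct Hw as [z [<- Hz]].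
      apply HL in Hz. destruct Hz; split; auto. }
    assert (Hdesc : Forall (desc Xn par t k) ws).
    { apply Forall_forall. intros w Hw. destruct (Hst w Hw) as [[HwS [[-> _]|[Hlt [Ha _]]]] Hk'].
      - lia.
      - split; auto. split; auto. exists (snd w - snd t)%nat. split; [lia|auto]. }
    pose proof (HH4 t k Ht Hk ws Hws Hdesc) as H4.
    assert (Hlow : forall w, In w ws -> Rpower (em * rr) p <= Rpower (pi w) p).
    { intros w Hw. destruct (Hst w Hw) as [[HwS [[-> _]|[Hlt [Ha [_ Hpp]]]]] Hk']. lia.
      apply Rle_Rpower_l. lra. split. nra.
      rewrite (pi_parent w ltac:(lia)). destruct (Hrho w HwS).
      pose proof (pi_pos _ (inS_parentV w HwS)). nra. }
    pose proof (sum_lower ws (fun w => Rpower (pi w) p) _ Hlow) as SL.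
    unfold ws in SL, H4. rewrite length_map in SL.
    assert (Hpos : 0 < Rpower (em * rr) p) by (unfold Rpower; apply exp_pos).
    pose proof (pi_pos t Ht).
    rewrite Rpower_div in HQ by nra.
    assert (INR (length L) <= Rpower (pi t) p / Rpower (em * rr) p).
    { apply (Rmult_le_reg_r (Rpower (em * rr) p)); auto. unfold Rdiv. rewrite Rmult_assoc, Rinv_l by lra. lra. }
    lra.
  - intros s Hs Hsk. apply HL. destruct s as [z k']. simpl in *. subst k'. split; auto.
    apply HE. destruct Hs as [HsS _]. exact HsS.
Qed.

Lemma per_top rr t Q : 0 < rr -> inSv t -> Rpower (pi t / (em * rr)) p <= Q -> 0 <= Q ->
  forall L0, exists l : list X, INR (length l) <= 1 + INR L0 * Q /\
    forall s, Stop rr t s -> (snd s <= snd t + L0)%nat -> In (fst s) l.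
Proof.
  intros Hrr Ht HQ HQ0 L0. induction L0 as [|L0 IH].
  - exists [fst t]. split. simpl; lra. intros s [HsS [[-> _]|[Hlt _]]] Hle. left; auto. lia.
  - destruct IH as [l [Hl Hc]].
    destruct (count_level rr t (snd t + S L0) Q Hrr Ht ltac:(lia) HQ) as [l2 [Hl2 Hc2]].
    exists (l ++ l2). split. rewrite length_app, plus_INR, S_INR. lra.
    intros s Hs Hle. apply in_or_app. destruct (Nat.eq_dec (snd s) (snd t + S L0)) as [E|E].
    right; auto. left; apply Hc; auto; lia.
Qed.

Lemma all_tops rr Q m (TopP : X -> Prop) L0 : 0 < rr -> 0 <= Q ->
  (forall z, TopP z -> inSv (z, m) /\ Rpower (pi (z, m) / (em * rr)) p <= Q) ->
  forall T : list X, exists l : list X, INR (length l) <= INR (length T) * (1 + INR L0 * Q) /\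
    forall z, In z T -> TopP z -> forall s, Stop rr (z, m) s -> (snd s <= m + L0)%nat -> In (fst s) l.
Proof.
  intros Hrr HQ0 HT T. induction T as [|z T IH].
  - exists []. split. simpl; lra. intros z [].
  - destruct IH as [l [Hl Hc]].
    assert (HL0 : 0 <= INR L0 * Q) by (apply Rmult_le_pos; auto; apply pos_INR).
    destruct (classic (TopP z)) as [Hz|Hz].
    + destruct (HT z Hz) as [HzS HzQ].
      destruct (per_top rr (z, m) Q Hrr HzS HzQ HQ0 L0) as [l1 [Hl1 Hc1]].
      exists (l1 ++ l). split. rewrite length_app, plus_INR. simpl length. rewrite S_INR. lra.
      intros z' [<-|Hz'] HT' s Hs Hle; apply in_or_app. left; apply Hc1; auto.
      right; eapply Hc; eauto.
    + exists l. split. simpl length. rewrite S_INR. lra.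
      intros z' [<-|Hz'] HT' s Hs Hle. contradiction. eapply Hc; eauto.
Qed.


Lemma nat_above x : 0 < x -> exists L : nat, x < INR L /\ INR L <= x + 1.
Proof.
  intros Hx. destruct (archimed x) as [H1 H2].
  assert (Hz : (0 < up x)%Z) by (apply lt_IZR; simpl; lra).
  exists (Z.to_nat (up x)). rewrite INR_IZR_INZ, Znat.Z2Nat.id by lia. lra.
Qed.

Lemma ln_le_self z : 0 < z -> ln z <= z.
Proof. intros H. pose proof (exp_ineq1_le (ln z)). rewrite exp_ln in H0; auto. lra. Qed.

Lemma Rpower_ge1 u s : 1 <= u -> 0 <= s -> 1 <= Rpower u s.
Proof. intros Hu Hs. rewrite <- (Rpower_O u) by lra. apply Rle_Rpower; lra. Qed.

Lemma assouad_beta beta : p < beta -> assouad_adm th beta.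
Proof.
  intros Hb. split; [lra|].
  assert (HK : 0 < / (K0 * K1)) by (apply Rinv_0_lt_compat; nra).
  destruct (ep_pow_small _ HK) as [j0 Hj0].
  set (CT := K0 / em ^ (j0 + 2)).
  assert (Hemj : 0 < em ^ (j0 + 2)) by (apply pow_lt; lra).
  assert (Hemj1 : em ^ (j0 + 2) <= 1) by (apply pow_le1; lra).
  assert (HCT : K0 <= CT).
  { unfold CT. apply (Rmult_le_reg_r (em ^ (j0 + 2))); auto. unfold Rdiv.
    rewrite Rmult_assoc, Rinv_l by lra. nra. }
  assert (Haj : 0 < a ^ j0) by (apply pow_lt; lra).
  destruct (exists_k (7 * a ^ j0) 1 ltac:(nra) ltac:(lra)) as [kT HkT].
  set (NT := (Nd ^ kT)%nat).
  pose proof Mc_pos as HMc.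
  assert (HMc1 : 1 <= Mc) by (unfold Mc; apply (Rmult_le_reg_r (1 - ep)); [lra|]; unfold Rdiv;
     rewrite Rmult_assoc, Rinv_l by lra; lra).
  set (C3 := CT * Mc * K0 / em).
  assert (HC3 : 1 <= C3).
  { unfold C3. assert (1 <= CT * Mc) by nra. assert (1 <= CT * Mc * K0) by nra.
    apply (Rmult_le_reg_r em); auto. unfold Rdiv. rewrite Rmult_assoc, Rinv_l by lra. nra. }
  set (C2 := C3 / em).
  assert (HC2 : 0 < C2) by (unfold C2; apply Rdiv_lt_0_compat; lra).
  set (eps := beta - p).
  assert (Heps : 0 < eps) by (unfold eps; lra).
  pose proof Le_pos as HLe.
  set (A := 1 + ln C3 / Le). set (B := / (eps * Le)). set (P2 := Rpower C2 p).
  assert (HlnC3 : 0 <= ln C3) by (rewrite <- ln_1; apply ln_le; lra).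
  assert (HA : 0 <= A) by (unfold A; assert (0 <= ln C3 / Le) by (apply Rmult_le_pos; [lra|apply Rlt_le, Rinv_0_lt_compat; lra]); lra).
  assert (HB : 0 < B) by (unfold B; apply Rinv_0_lt_compat; nra).
  assert (HP2 : 0 < P2) by (unfold P2, Rpower; apply exp_pos).
  exists (INR NT * (1 + (A + B) * P2)).
  intros x r Rad Hr HrR.
  assert (HR : 0 < Rad) by lra.
  set (u := Rad / r).
  assert (Hu : 1 < u) by (unfold u; apply (Rmult_lt_reg_r r); auto; unfold Rdiv; rewrite Rmult_assoc, Rinv_l by lra; lra).
  destruct (choose_m x Rad HR) as [m [HG [q' [Hq' [Hsq' [Hdq' Hpq']]]]]].
  set (rr := rrof r).
  assert (Hrr : 0 < rr) by (unfold rr, rrof; apply Rdiv_lt_0_compat; nra).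
  set (Q := Rpower (C2 * u) p).
  assert (HQ0 : 0 <= Q) by (unfold Q, Rpower; apply Rlt_le, exp_pos).
  assert (HxL : 0 < ln (C3 * u) / Le).
  { apply Rdiv_lt_0_compat; auto. rewrite <- ln_1. apply ln_increasing; nra. }
  destruct (nat_above _ HxL) as [L [HL1 HL2]].
  set (TopP := fun z => Xn m z /\ d z x < 7 * apow a (m - j0)).
  assert (HT : forall z, TopP z -> inSv (z, m) /\ Rpower (pi (z, m) / (em * rr)) p <= Q).
  { intros z [Hz Hdz]. split; auto.
    pose proof (claim2 x Rad m j0 (z, m) q' Hz eq_refl Hdz Hq' Hsq' Hdq' Hpq') as Hpt.
    fold CT in Hpt. unfold Q. apply Rle_Rpower_l. lra. split.
    apply Rdiv_lt_0_compat. apply pi_pos; auto. nra.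
    assert (E : CT * Rad / (em * rr) = C2 * u).
    { unfold rr, rrof, C2, C3, u. field. repeat split; lra. }
    rewrite <- E. unfold Rdiv. apply Rmult_le_compat_r; auto. apply Rlt_le, Rinv_0_lt_compat; nra. }
  destruct (fin_ball (Xn m) (apow a m) x (7 * a ^ j0 * apow a m) kT (Xn_sep m)) as [T [HTl HTc]].
  { pose proof (apow_pos m). nra. }
  { replace (7 * a ^ j0 * apow a m / 2 ^ kT) with (7 * a ^ j0 / 2 ^ kT * apow a m) by (field; apply pow_nonzero; lra).
    pose proof (apow_pos m). nra. }
  destruct (all_tops rr Q m TopP L Hrr HQ0 HT T) as [l [Hl Hc]].
  exists l. split.
  -
    assert (HTN : INR (length T) <= INR NT) by (apply le_INR; auto).
    assert (HLQ : 0 <= INR L * Q) by (apply Rmult_le_pos; auto; apply pos_INR).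
    eapply Rle_trans; [exact Hl|].
    set (U := Rpower u p). set (W := Rpower u eps).
    assert (HU : 1 <= U) by (apply Rpower_ge1; lra).
    assert (HW : 1 <= W) by (apply Rpower_ge1; lra).
    assert (Hbeta : Rpower u beta = U * W).
    { unfold U, W. rewrite <- Rpower_plus. f_equal. unfold eps; ring. }
    rewrite Hbeta.
    assert (HQ : Q = P2 * U) by (unfold Q, P2, U; rewrite Rpower_mult_distr; auto; lra).
    assert (Hlnu : ln u <= W / eps).
    { unfold W. assert (ln (Rpower u eps) <= Rpower u eps) by (apply ln_le_self; unfold Rpower; apply exp_pos).
      rewrite ln_Rpower in H. apply (Rmult_le_reg_l eps); auto. unfold Rdiv.
      rewrite <- Rmult_assoc, (Rmult_comm eps (Rpower u eps)), Rmult_assoc, Rinv_r by lra. lra. }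
    assert (HLb : INR L <= A + B * W).
    { rewrite ln_mult in HL2 by lra. unfold A, B.
      assert ((ln C3 + ln u) / Le = ln C3 / Le + ln u / Le) by (field; lra).
      assert (ln u / Le <= W / eps / Le) by (unfold Rdiv; apply Rmult_le_compat_r; [apply Rlt_le, Rinv_0_lt_compat; lra|lra]).
      assert (W / eps / Le = / (eps * Le) * W) by (field; lra). lra. }
    assert (H1 : 1 + INR L * Q <= (1 + (A + B) * P2) * (U * W)).
    { rewrite HQ.
      assert (INR L * (P2 * U) <= (A + B * W) * (P2 * U)) by (apply Rmult_le_compat_r; nra).
      assert (A * (P2 * U) <= A * (P2 * U) * W).
      { assert (0 <= A * (P2 * U)) by (apply Rmult_le_pos; nra). nra. }
      assert (1 <= U * W) by nra.
      nra. }
    assert (0 <= 1 + INR L * Q) by lra.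
    assert (INR (length T) * (1 + INR L * Q) <= INR NT * (1 + INR L * Q)) by (apply Rmult_le_compat_r; lra).
    assert (INR NT * (1 + INR L * Q) <= INR NT * ((1 + (A + B) * P2) * (U * W))) by (apply Rmult_le_compat_l; [apply pos_INR|lra]).
    lra.
  -
    intros y Hy. unfold mball in Hy.
    destruct (claim4 x Rad r m j0 y HR Hr Hj0 HG Hy) as [t [s [Ht [Hst [Hdt [Hstop Hths]]]]]].
    exists (fst s). split; [|unfold mball; auto].
    destruct t as [zt mt]. simpl in Hst. subst mt. simpl in Hdt.
    apply (Hc zt).
    + apply HTc. exact Ht. pose proof (apow_sub m j0). rewrite d_sym. nra.
    + split; auto.
    + exact Hstop.
    + pose proof (claim2 x Rad m j0 (zt, m) q' Ht eq_refl Hdt Hq' Hsq' Hdq' Hpq') as Hpt. fold CT in Hpt.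
      assert (HCTR : 0 < CT * Rad) by nra.
      apply (stop_level rr (zt, m) s (CT * Rad) L Ht Hstop Hpt HCTR).
      rewrite pow_exp by lra.
      assert (E : rr / (CT * Rad) = exp (- ln (C3 * u))).
      { rewrite exp_Ropp, exp_ln by nra. unfold rr, rrof, C3, u. field. repeat split; lra. }
      rewrite E. apply exp_increasing.
      assert (ln ep = - Le) by (unfold Le; ring). rewrite H.
      assert (ln (C3 * u) < INR L * Le).
      { apply (Rmult_lt_reg_r (/ Le)). apply Rinv_0_lt_compat; lra.
        rewrite Rmult_assoc, Rinv_r by lra. rewrite Rmult_1_r. exact HL1. }
      lra.
Qed.

Lemma assouad_final : Rbar_le (assouad_dim th) (Finite p).
Proof.
  unfold assouad_dim. destruct (Glb_Rbar_correct (assouad_adm th)) as [Hlb _].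
  destruct (Glb_Rbar (assouad_adm th)) as [l| |] eqn:E; simpl; auto.
  - apply Rnot_lt_le. intros Hlt.
    assert (Hb : assouad_adm th ((l + p) / 2)) by (apply assouad_beta; lra).
    specialize (Hlb _ Hb). simpl in Hlb. lra.
  - specialize (Hlb (p + 1) (assouad_beta (p + 1) ltac:(lra))). simpl in Hlb. auto.
Qed.

End Main.

Theorem theorem3p3 (X : Type) (d : X -> X -> R) (a lam : R)
    (Xn : nat -> X -> Prop) (x0 : X) (par : X -> nat -> X)
    (rho : V X -> R) (p : R) :
  is_metric d -> mcompact d -> doubling d -> diam_eq d (1 / 2) ->
  6 <= lam -> lam <= a ->
  hyperbolic_filling d a Xn x0 par ->
  (forall v, inS Xn v -> 0 < rho v /\ rho v < 1) ->
  H1 Xn rho ->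
  H2 d a lam Xn par rho ->
  H3 d a lam Xn par rho ->
  0 < p -> H4 Xn par rho p ->
  exists theta : X -> X -> R,
    is_metric theta /\ in_J d theta /\ Rbar_le (assouad_dim theta) (Finite p).
Proof.
  intros Hmet _ Hdbl Hdiam Hlam Hla Hhf _ HH1 HH2 HH3 Hp HH4.
  destruct Hdbl as [Nd HNd].
  destruct HH1 as [em [ep [Hem [Hemep [Hep1 Hrho]]]]].
  destruct HH2 as [K0 [HK0 H2']].
  destruct HH3 as [K1 [HK1 H3']].
  assert (Hdiam' : forall x y, d x y <= 1/2).
  { intros x y. destruct Hdiam as [Hub _]. apply Hub. exists x, y; auto. }
  exists (th X d a lam Xn par rho). split; [|split].
  - apply (th_metric X d a lam Xn x0 par rho em ep K1 Nd); auto.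
  - apply (th_inJ X d a lam Xn x0 par rho em ep K0 K1 Nd); auto.
  - apply (assouad_final X d a lam Xn x0 par rho p em ep K0 K1 Nd); auto.
Qed.
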